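(* Let $H$ be a Hilbert space, $\gamma>0$, $L\ge 1$ an integer, and let $A,A_1,\dots,A_L$ be compact operators on $H$ with $A=\sum_{k=1}^L A_k$. Suppose the family $\{A_k\}$ is asymptotically orthogonal, i.e. $$A_k^*A_j\in\Sigma^0_{2\gamma}\quad\text{and}\quad A_kA_j^*\in\Sigma^0_{2\gamma}\qquad\text{for all } j\neq k,\ j,k=1,\dots,L.$$ Then $$\Delta_\gamma(A)=\limsup_{s\to0+}s^{1/\gamma}\log\Big(\sum_{k=1}^L\tilde n(s,A_k)\Big),\qquad \delta_\gamma(A)=\liminf_{s\to0+}s^{1/\gamma}\log\Big(\sum_{k=1}^L\tilde n(s,A_k)\Big).$$
   Context: For a compact operator $A$ with singular values $s_n(A)$ ($n\ge1$, non-increasing, with multiplicity), the counting function is $n(s,A)=\#\{n: s_n(A)>s\}$, $s>0$, and the shifted counting function is $\tilde n(s,A)=n(s,A)+2$. For $\beta>0$, $\Sigma^0_\beta$ denotes the class of compact operators $A$ with $s_n(A)=o\big((\log(n+1))^{-\beta}\big)$ as $n\to\infty$. For a compact operator $A$ and $\gamma>0$, $\Delta_\gamma(A)=\limsup_{s\to0+}s^{1/\gamma}\log\tilde n(s,A)$ and $\delta_\gamma(A)=\liminf_{s\to0+}s^{1/\gamma}\log\tilde n(s,A)$. *)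

(* Defs.v *)
From Stdlib Require Import Reals.
From Coquelicot Require Import Coquelicot.
Open Scope R_scope.

Record Hilbert := {
  hcarrier :> Type;
  h0 : hcarrier;
  hadd : hcarrier -> hcarrier -> hcarrier;
  hopp : hcarrier -> hcarrier;
  hscal : C -> hcarrier -> hcarrier;
  hinner : hcarrier -> hcarrier -> C;
  hadd_assoc : forall x y z, hadd x (hadd y z) = hadd (hadd x y) z;
  hadd_comm : forall x y, hadd x y = hadd y x;
  hadd_0 : forall x, hadd h0 x = x;
  hadd_opp : forall x, hadd x (hopp x) = h0;
  hscal_1 : forall x, hscal (RtoC 1) x = x;
  hscal_assoc : forall a b x, hscal a (hscal b x) = hscal (Cmult a b) x;
  hscal_distr_l : forall a x y, hscal a (hadd x y) = hadd (hscal a x) (hscal a y);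
  hscal_distr_r : forall a b x, hscal (Cplus a b) x = hadd (hscal a x) (hscal b x);
  hinner_add : forall x y z, hinner (hadd x y) z = Cplus (hinner x z) (hinner y z);
  hinner_scal : forall a x y, hinner (hscal a x) y = Cmult a (hinner x y);
  hinner_conj : forall x y, hinner y x = Cconj (hinner x y);
  hinner_pos : forall x, 0 <= Re (hinner x x);
  hinner_def : forall x, hinner x x = RtoC 0 -> x = h0;
  hcomplete : forall u : nat -> hcarrier,
    (forall eps, 0 < eps -> exists N, forall m n, (N <= m)%nat -> (N <= n)%nat ->
        sqrt (Re (hinner (hadd (u m) (hopp (u n))) (hadd (u m) (hopp (u n))))) < eps) ->
    exists l, forall eps, 0 < eps -> exists N, forall n, (N <= n)%nat ->
        sqrt (Re (hinner (hadd (u n) (hopp l)) (hadd (u n) (hopp l)))) < eps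
}.

Section Ops.
Variable H : Hilbert.

Definition hnorm (x : H) : R := sqrt (Re (hinner H x x)).
Definition hsub (x y : H) : H := hadd H x (hopp H y).

Fixpoint hsum (n : nat) (f : nat -> H) : H :=
  match n with O => h0 H | S m => hadd H (hsum m f) (f m) end.

Definition is_linear (A : H -> H) : Prop :=
  (forall x y, A (hadd H x y) = hadd H (A x) (A y)) /\
  (forall a x, A (hscal H a x) = hscal H a (A x)).

Definition is_compact_op (A : H -> H) : Prop :=
  is_linear A /\
  forall u : nat -> H, (exists M, forall n, hnorm (u n) <= M) ->
    exists (phi : nat -> nat) (l : H),
      (forall n, (phi n < phi (S n))%nat) /\
      (forall eps, 0 < eps -> exists N, forall n, (N <= n)%nat ->
          hnorm (hsub (A (u (phi n))) l) < eps).

Definition is_adjoint (A B : H -> H) : Prop :=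
  forall x y, hinner H (A x) y = hinner H x (B y).

Definition lin_indep (k : nat) (v : nat -> H) : Prop :=
  forall c : nat -> C, hsum k (fun i => hscal H (c i) (v i)) = h0 H ->
    forall i, (i < k)%nat -> c i = RtoC 0.

(** v is an eigenvector of A^*A with eigenvalue lam:  A^*A v = lam v,
    written through <A^*A v, y> = <A v, A y> for all y. *)
Definition eigvec_AstarA (A : H -> H) (lam : R) (v : H) : Prop :=
  forall y, hinner H (A v) (A y) = Cmult (RtoC lam) (hinner H v y).

(** counting function n(s,A) = #{n : s_n(A) > s}: the number (with
    multiplicity) of eigenvalues of |A| = (A^*A)^{1/2} exceeding s, i.e. the
    dimension of the span of the eigenspaces of A^*A for eigenvalues > s^2,
    i.e. the largest number of linearly independent such eigenvectors. *)
Definition ncount (s : R) (A : H -> H) : R :=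
  real (Lub_Rbar (fun x => exists k : nat, x = INR k /\
     exists v : nat -> H, lin_indep k v /\
       forall i, (i < k)%nat -> exists lam, s ^ 2 < lam /\ eigvec_AstarA A lam (v i))).

Definition ntilde (s : R) (A : H -> H) : R := ncount s A + 2.

(** singular values: s_n(A) = inf { s > 0 : n(s,A) < n }  (n >= 1) *)
Definition sval (n : nat) (A : H -> H) : R :=
  real (Glb_Rbar (fun s => 0 < s /\ ncount s A < INR n)).

Definition Sigma0 (beta : R) (A : H -> H) : Prop :=
  is_compact_op A /\
  forall eps, 0 < eps -> exists N, forall n, (N <= n)%nat ->
    Rabs (sval n A) <= eps * Rpower (ln (INR n + 1)) (- beta).

End Ops.

Definition limsup0 (f : R -> R) : Rbar :=
  Glb_Rbar (fun y => exists d, 0 < d /\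
     Rbar_le (Lub_Rbar (fun x => exists s, 0 < s < d /\ x = f s)) (Finite y)).
Definition liminf0 (f : R -> R) : Rbar :=
  Lub_Rbar (fun y => exists d, 0 < d /\
     Rbar_le (Finite y) (Glb_Rbar (fun x => exists s, 0 < s < d /\ x = f s))).

Fixpoint rsum (n : nat) (f : nat -> R) : R :=
  match n with O => 0 | S m => rsum m f + f m end.

Definition Delta_gamma (H : Hilbert) (gamma : R) (A : H -> H) : Rbar :=
  limsup0 (fun s => Rpower s (/ gamma) * ln (ntilde H s A)).
Definition delta_gamma (H : Hilbert) (gamma : R) (A : H -> H) : Rbar :=
  liminf0 (fun s => Rpower s (/ gamma) * ln (ntilde H s A)).

(* Main.v *)
Require Import Defs.
From Stdlib Require Import Reals Lra Lia Psatz List Classical ClassicalEpsilon FunctionalExtensionality.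
From Coquelicot Require Import Coquelicot.
Open Scope R_scope.

Record SIP := {
  sc :> Type; s0 : sc; sadd : sc -> sc -> sc; sopp : sc -> sc;
  sscal : C -> sc -> sc; sinn : sc -> sc -> C;
  sadd_assoc : forall x y z, sadd x (sadd y z) = sadd (sadd x y) z;
  sadd_comm : forall x y, sadd x y = sadd y x;
  sadd_0 : forall x, sadd s0 x = x;
  sadd_opp : forall x, sadd x (sopp x) = s0;
  sscal_1 : forall x, sscal (RtoC 1) x = x;
  sscal_assoc : forall a b x, sscal a (sscal b x) = sscal (Cmult a b) x;
  sscal_distr_l : forall a x y, sscal a (sadd x y) = sadd (sscal a x) (sscal a y);
  sscal_distr_r : forall a b x, sscal (Cplus a b) x = sadd (sscal a x) (sscal b x);
  sinn_add : forall x y z, sinn (sadd x y) z = Cplus (sinn x z) (sinn y z);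
  sinn_scal : forall a x y, sinn (sscal a x) y = Cmult a (sinn x y);
  sinn_conj : forall x y, sinn y x = Cconj (sinn x y);
  sinn_pos : forall x, 0 <= Re (sinn x x) }.

Definition SH (H : Hilbert) : SIP :=
  Build_SIP H (h0 H) (hadd H) (hopp H) (hscal H) (hinner H)
   (hadd_assoc H) (hadd_comm H) (hadd_0 H) (hadd_opp H) (hscal_1 H) (hscal_assoc H)
   (hscal_distr_l H) (hscal_distr_r H) (hinner_add H) (hinner_scal H) (hinner_conj H)
   (hinner_pos H).

Fixpoint csum (n : nat) (f : nat -> C) : C :=
  match n with O => RtoC 0 | S m => Cplus (csum m f) (f m) end.

Lemma cproj (a b : C) : fst a = fst b -> snd a = snd b -> a = b.
Proof. destruct a, b; simpl; intros; subst; auto. Qed.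

Ltac cgo := repeat match goal with z : C |- _ => destruct z end;
  apply cproj; simpl; try ring.

Section S.
Variable X : SIP.
Notation "x +v y" := (sadd X x y) (at level 50, left associativity).
Notation "c · x" := (sscal X c x) (at level 40).
Notation "<< x , y >>" := (sinn X x y).
Notation "0v" := (s0 X).

Fixpoint ssum (n : nat) (f : nat -> X) : X :=
  match n with O => s0 X | S m => sadd X (ssum m f) (f m) end.

Definition ssub (x y : X) := sadd X x (sopp X y).
Definition nrm2 (x : X) := Re (sinn X x x).
Definition nrm (x : X) := sqrt (nrm2 x).

Lemma sadd_0r x : x +v 0v = x.
Proof. rewrite sadd_comm; apply sadd_0. Qed.

Lemma sadd_cancel x y z : x +v y = x +v z -> y = z.
Proof.
  intro E. assert (E2 : sopp X x +v (x +v y) = sopp X x +v (x +v z)) by (rewrite E; auto).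
  rewrite !sadd_assoc, (sadd_comm X (sopp X x) x), sadd_opp, !sadd_0 in E2. exact E2.
Qed.

Lemma sscal_0 x : (RtoC 0) · x = 0v.
Proof.
  apply (sadd_cancel ((RtoC 0) · x)). rewrite <- sscal_distr_r, sadd_0r.
  f_equal. cgo.
Qed.

Lemma sscal_z c : c · 0v = 0v.
Proof.
  rewrite <- (sscal_0 0v) at 1. rewrite sscal_assoc.
  replace (Cmult c (RtoC 0)) with (RtoC 0) by cgo. apply sscal_0.
Qed.

Lemma sopp_scal x : sopp X x = (RtoC (-1)) · x.
Proof.
  apply (sadd_cancel x). rewrite sadd_opp.
  transitivity ((RtoC 1) · x +v (RtoC (-1)) · x). 2: rewrite sscal_1; auto.
  rewrite <- sscal_distr_r.
  replace (Cplus (RtoC 1) (RtoC (-1))) with (RtoC 0) by cgo. rewrite sscal_0; auto.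
Qed.

Lemma sinn_0l y : << 0v, y >> = RtoC 0.
Proof. rewrite <- (sscal_0 0v), sinn_scal. cgo. Qed.

Lemma sinn_0r y : << y, 0v >> = RtoC 0.
Proof. rewrite sinn_conj, sinn_0l. cgo. Qed.

Lemma sinn_addr x y z : << x, y +v z >> = Cplus << x, y >> << x, z >>.
Proof. rewrite sinn_conj, sinn_add, Cplus_conj, <- !sinn_conj. auto. Qed.

Lemma sinn_scalr c x y : << x, c · y >> = Cmult (Cconj c) << x, y >>.
Proof. rewrite sinn_conj, sinn_scal, Cmult_conj, <- sinn_conj. auto. Qed.

Lemma sinn_opp x y : << sopp X x, y >> = Copp << x, y >>.
Proof. rewrite sopp_scal, sinn_scal. cgo. Qed.

Lemma sinn_oppr x y : << x, sopp X y >> = Copp << x, y >>.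
Proof. rewrite sopp_scal, sinn_scalr. cgo. Qed.

Lemma sinn_sum_l n f y : << ssum n f, y >> = csum n (fun i => << f i, y >>).
Proof. induction n; simpl. apply sinn_0l. rewrite sinn_add, IHn; auto. Qed.

Lemma sinn_sum_r n f y : << y, ssum n f >> = csum n (fun i => << y, f i >>).
Proof. induction n; simpl. apply sinn_0r. rewrite sinn_addr, IHn; auto. Qed.

Lemma im_self x : Im << x, x >> = 0.
Proof.
  pose proof (sinn_conj X x x) as E. destruct (sinn X x x) as [a b].
  unfold Cconj in E; simpl in *. injection E. intros; lra.
Qed.

Lemma self_eq x : << x, x >> = RtoC (nrm2 x).
Proof. unfold nrm2. pose proof (im_self x). destruct (sinn X x x); apply cproj; simpl in *; auto. Qed.

Lemma nrm2_pos x : 0 <= nrm2 x.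
Proof. apply sinn_pos. Qed.

Lemma re_sym x y : Re << x, y >> = Re << y, x >>.
Proof. rewrite (sinn_conj X x y). destruct (sinn X x y); simpl; auto. Qed.

Lemma nrm2_add x y : nrm2 (x +v y) = nrm2 x + nrm2 y + 2 * Re << x, y >>.
Proof.
  unfold nrm2. rewrite sinn_add, !sinn_addr. rewrite !re_plus. rewrite (re_sym y x). ring.
Qed.

Lemma nrm2_scal c x : nrm2 (c · x) = (Re c ^ 2 + Im c ^ 2) * nrm2 x.
Proof.
  unfold nrm2. rewrite sinn_scal, sinn_scalr. pose proof (im_self x).
  destruct (sinn X x x), c; simpl in *. subst. ring.
Qed.

Lemma nrm2_opp x : nrm2 (sopp X x) = nrm2 x.
Proof. rewrite sopp_scal, nrm2_scal. simpl. ring. Qed.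

Lemma re_scal_real (r : R) x y : Re << (RtoC r) · x, y >> = r * Re << x, y >>.
Proof. rewrite sinn_scal. destruct (sinn X x y); simpl; ring. Qed.

Lemma re_scalr_real (r : R) x y : Re << x, (RtoC r) · y >> = r * Re << x, y >>.
Proof. rewrite sinn_scalr. destruct (sinn X x y); simpl; ring. Qed.

Lemma amgm x y t : 0 < t -> 2 * Re << x, y >> <= t * nrm2 x + nrm2 y / t.
Proof.
  intro Ht. pose proof (nrm2_pos ((RtoC t) · x +v sopp X y)) as P.
  rewrite nrm2_add, nrm2_scal, nrm2_opp in P. simpl in P.
  rewrite re_scal_real, sinn_oppr, re_opp in P.
  assert (t * (2 * Re << x, y >>) <= t * (t * nrm2 x + nrm2 y / t)).
  { field_simplify; try lra. }
  apply Rmult_le_reg_l in H; lra.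
Qed.

Lemma cs_re x y : Re << x, y >> ^ 2 <= nrm2 x * nrm2 y.
Proof.
  destruct (Req_dec (nrm2 y) 0) as [Hy|Hy].
  - destruct (Req_dec (Re << x, y >>) 0) as [Hr|Hr].
    + rewrite Hr, Hy. lra.
    + exfalso. set (r := Re << x, y >>) in *.
      pose proof (nrm2_pos (x +v (RtoC (-(nrm2 x + 1)/(2*r))) · y)) as P.
      rewrite nrm2_add, nrm2_scal, re_scalr_real, Hy in P. simpl in P. fold r in P.
      rewrite Rmult_0_r in P.
      replace (2 * (- (nrm2 x + 1) / (2 * r) * r)) with (-(nrm2 x + 1)) in P by (field; auto). lra.
  - pose proof (nrm2_pos y). set (r := Re << x, y >>) in *.
    pose proof (nrm2_pos (x +v (RtoC (- r / nrm2 y)) · y)) as P.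
    rewrite nrm2_add, nrm2_scal, re_scalr_real in P. simpl in P. fold r in P.
    assert (0 <= nrm2 x - r^2 / nrm2 y).
    { replace (nrm2 x - r^2 / nrm2 y) with
        (nrm2 x + ((- r / nrm2 y) ^ 2 + 0 ^ 2) * nrm2 y + 2 * (- r / nrm2 y * r)) by (field; auto).
      exact P. }
    assert (0 <= (nrm2 x - r^2 / nrm2 y) * nrm2 y) by (apply Rmult_le_pos; lra).
    replace ((nrm2 x - r^2 / nrm2 y) * nrm2 y) with (nrm2 x * nrm2 y - r^2) in H1 by (field; auto).
    lra.
Qed.

Lemma nrm_pos x : 0 <= nrm x.
Proof. apply sqrt_pos. Qed.

Lemma nrm_sq x : nrm x * nrm x = nrm2 x.
Proof. apply sqrt_sqrt, nrm2_pos. Qed.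

Lemma cs_re' x y : Re << x, y >> <= nrm x * nrm y.
Proof.
  pose proof (cs_re x y). pose proof (nrm_pos x). pose proof (nrm_pos y).
  rewrite <- (nrm_sq x), <- (nrm_sq y) in H.
  set (r := Re << x, y >>) in *. set (a := nrm x) in *. set (b := nrm y) in *.
  assert (0 <= a * b) by nra.
  destruct (Rle_dec r (a*b)); auto. exfalso.
  assert (a * b * (a * b) < r * r) by (apply Rmult_le_0_lt_compat; lra). nra.
Qed.

Lemma cs_abs x y : Rabs (Re << x, y >>) <= nrm x * nrm y.
Proof.
  apply Rabs_le. split. 2: apply cs_re'.
  pose proof (cs_re' x (sopp X y)). rewrite sinn_oppr, re_opp in H.
  unfold nrm at 2 in H. rewrite nrm2_opp in H. fold (nrm y) in H. lra.
Qed.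

Lemma nrm_triangle x y : nrm (x +v y) <= nrm x + nrm y.
Proof.
  unfold nrm at 1. rewrite nrm2_add. pose proof (cs_re' x y).
  rewrite <- (nrm_sq x), <- (nrm_sq y).
  pose proof (nrm_pos x). pose proof (nrm_pos y).
  apply Rsqr_incr_0; try apply sqrt_pos; try lra. unfold Rsqr.
  rewrite sqrt_sqrt. nra. pose proof (nrm2_pos (x +v y)). rewrite nrm2_add in H2.
  rewrite <- (nrm_sq x), <- (nrm_sq y) in H2. lra.
Qed.

Lemma cmod_inn x y : Cmod << x, y >> <= nrm x * nrm y.
Proof.
  set (z := << x, y >>).
  pose proof (cs_re' x (z · y)) as P.
  rewrite sinn_scalr in P. fold z in P.
  unfold nrm at 2 in P. rewrite nrm2_scal in P. fold (nrm y) in P.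
  assert (E : Re (Cmult (Cconj z) z) = Cmod z ^ 2).
  { rewrite Cmod2_alt. destruct z; simpl; ring. }
  rewrite E in P.
  assert (E2 : sqrt ((Re z ^ 2 + Im z ^ 2) * nrm2 y) = Cmod z * nrm y).
  { unfold Cmod, nrm. rewrite sqrt_mult_alt. reflexivity.
    pose proof (pow2_ge_0 (Re z)). pose proof (pow2_ge_0 (Im z)). lra. }
  rewrite E2 in P. pose proof (Cmod_ge_0 z). pose proof (nrm_pos x). pose proof (nrm_pos y).
  destruct (Req_dec (Cmod z) 0). rewrite H2. nra. nra.
Qed.

End S.

Section LA.
Variable X : SIP.
Notation "x +v y" := (sadd X x y) (at level 50, left associativity).
Notation "c · x" := (sscal X c x) (at level 40).
Notation "<< x , y >>" := (sinn X x y).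
Notation "0v" := (s0 X).

Fixpoint lsum (l : list X) (c : nat -> C) : X :=
  match l with nil => 0v | u :: t => c O · u +v lsum t (fun i => c (S i)) end.

Definition inspan (l : list X) (x : X) := exists c, x = lsum l c.
Definition nindep (l : list X) := forall c, nrm2 X (lsum l c) = 0 -> forall i, (i < length l)%nat -> c i = RtoC 0.
Definition orthL (F : list X) (x : X) := forall f, In f F -> << x, f >> = RtoC 0.

Lemma vswap4 a b c d : (a +v b) +v (c +v d) = (a +v c) +v (b +v d).
Proof.
  rewrite <- !sadd_assoc. f_equal. rewrite !sadd_assoc. f_equal. apply sadd_comm.
Qed.

Lemma lsum_ext l c d : (forall i, (i < length l)%nat -> c i = d i) -> lsum l c = lsum l d.
Proof.
  revert c d; induction l; simpl; intros; auto.
  rewrite (H O) by lia. f_equal. apply IHl. intros; apply H; lia.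
Qed.

Lemma lsum_zero l : lsum l (fun _ => RtoC 0) = 0v.
Proof. induction l; simpl; auto. rewrite IHl, sscal_0, sadd_0; auto. Qed.

Lemma lsum_add l c d : lsum l c +v lsum l d = lsum l (fun i => Cplus (c i) (d i)).
Proof.
  revert c d; induction l; simpl; intros. apply sadd_0.
  rewrite vswap4, IHl, sscal_distr_r. auto.
Qed.

Lemma lsum_scal a l c : a · lsum l c = lsum l (fun i => Cmult a (c i)).
Proof.
  revert c; induction l; simpl; intros. apply sscal_z.
  rewrite sscal_distr_l, IHl, sscal_assoc. auto.
Qed.

Lemma lsum_app l1 l2 c : lsum (l1 ++ l2) c = lsum l1 c +v lsum l2 (fun i => c (length l1 + i)%nat).
Proof.
  revert c; induction l1; simpl; intros. rewrite sadd_0; auto.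
  rewrite IHl1, sadd_assoc. auto.
Qed.

Fixpoint lcs (l : list X) (c : nat -> C) (b : X -> C) : C :=
  match l with nil => RtoC 0 | u :: t => Cplus (Cmult (c O) (b u)) (lcs t (fun i => c (S i)) b) end.

Lemma lsum_map l c b p :
  lsum (map (fun u => u +v (b u) · p) l) c = lsum l c +v (lcs l c b) · p.
Proof.
  revert c; induction l; simpl; intros. rewrite sscal_0, sadd_0; auto.
  rewrite IHl, sscal_distr_l, sscal_assoc, vswap4, <- sscal_distr_r. auto.
Qed.

Lemma lsum_single u t : lsum (u :: t) (fun i => if Nat.eqb i 0 then RtoC 1 else RtoC 0) = u.
Proof. simpl. rewrite lsum_zero, sadd_0r, sscal_1; auto. Qed.

Lemma span_ind (P : X -> Prop) l :
  P 0v -> (forall x y, P x -> P y -> P (x +v y)) -> (forall c x, P x -> P (c · x)) ->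
  (forall u, In u l -> P u) -> forall x, inspan l x -> P x.
Proof.
  intros H0 Ha Hs Hl x [c ->]. revert c Hl. induction l; simpl; intros; auto.
Qed.

Lemma inspan_0 l : inspan l 0v.
Proof. exists (fun _ => RtoC 0). rewrite lsum_zero; auto. Qed.

Lemma inspan_add l x y : inspan l x -> inspan l y -> inspan l (x +v y).
Proof. intros [c ->] [d ->]. exists (fun i => Cplus (c i) (d i)). apply lsum_add. Qed.

Lemma inspan_scal l a x : inspan l x -> inspan l (a · x).
Proof. intros [c ->]. exists (fun i => Cmult a (c i)). apply lsum_scal. Qed.

Lemma inspan_In l u : In u l -> inspan l u.
Proof.
  induction l; simpl; intros H. contradiction. destruct H as [->|Hi].
  - exists (fun i => if Nat.eqb i 0 then RtoC 1 else RtoC 0). rewrite lsum_single; auto.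
  - destruct (IHl Hi) as [c Hc]. exists (fun i => match i with O => RtoC 0 | S j => c j end).
    simpl. rewrite sscal_0, sadd_0. auto.
Qed.

Lemma inspan_trans l w x : (forall u, In u w -> inspan l u) -> inspan w x -> inspan l x.
Proof.
  intros Hw. apply span_ind; auto. apply inspan_0. apply inspan_add. apply inspan_scal.
Qed.

Lemma orth_span F x : (forall u, In u F -> << x, u >> = RtoC 0) -> forall y, inspan F y -> << x, y >> = RtoC 0.
Proof.
  intros Hu. apply (span_ind (fun y => << x, y >> = RtoC 0)).
  - apply sinn_0r.
  - intros a b Ha Hb. rewrite sinn_addr, Ha, Hb. cgo.
  - intros c a Ha. rewrite sinn_scalr, Ha. cgo.
  - auto.
Qed.

Lemma orthL_span F l x : (forall u, In u l -> orthL F u) -> inspan l x -> orthL F x.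
Proof.
  intros Hl. apply (span_ind (orthL F)).
  - intros f _. apply sinn_0l.
  - intros a b Ha Hb f Hf. rewrite sinn_add, Ha, Hb; auto. cgo.
  - intros c a Ha f Hf. rewrite sinn_scal, Ha; auto. cgo.
  - auto.
Qed.

Lemma nrm2_zero_iff_inn x : nrm2 X x = 0 <-> << x, x >> = RtoC 0.
Proof.
  rewrite self_eq. split; intro E. rewrite E; auto. injection E; auto.
Qed.

Lemma nindep_tl u t : nindep (u :: t) -> nindep t.
Proof.
  intros Hn c Hc i Hi.
  specialize (Hn (fun j => match j with O => RtoC 0 | S k => c k end)). simpl in Hn.
  rewrite sscal_0, sadd_0 in Hn. apply (Hn Hc (S i)). lia.
Qed.

Lemma one_step l f : nindep l -> l <> nil ->
  exists w, length w = (length l - 1)%nat /\ nindep w /\ (forall u, In u w -> inspan l u)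
    /\ (forall u, In u w -> << u, f >> = RtoC 0).
Proof.
  intros Hn Hne.
  destruct (classic (exists p, In p l /\ << p, f >> <> RtoC 0)) as [[p [Hp Hpf]]|Hno].
  - destruct (in_split _ _ Hp) as [l1 [l2 El]].
    set (a := << p, f >>) in *.
    set (b := fun u => Copp (Cdiv (<< u, f >>) a)).
    exists (map (fun u => u +v (b u) · p) (l1 ++ l2)). split; [|split; [|split]].
    + rewrite length_map, El, !length_app. simpl. lia.
    + intros c Hc i Hi. rewrite length_map, length_app in Hi.
      rewrite lsum_map, lsum_app in Hc.
      set (g := lcs (l1 ++ l2) c b) in *.
      set (c' := fun j => if Nat.ltb j (length l1) then c j else if Nat.eqb j (length l1) then g else c (j - 1)%nat).
      assert (E : lsum l c' = lsum l1 c +v lsum l2 (fun i => c (length l1 + i)%nat) +v g · p).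
      { rewrite El, lsum_app. simpl.
        rewrite (lsum_ext l1 c' c).
        2:{ intros j Hj. unfold c'. rewrite (proj2 (Nat.ltb_lt _ _) Hj). auto. }
        unfold c' at 1. rewrite Nat.add_0_r, Nat.ltb_irrefl, Nat.eqb_refl.
        rewrite (lsum_ext l2 (fun i : nat => c' (length l1 + S i)%nat) (fun i => c (length l1 + i)%nat)).
        2:{ intros j Hj. unfold c'. replace (Nat.ltb (length l1 + S j) (length l1)) with false.
            replace (Nat.eqb (length l1 + S j) (length l1)) with false. f_equal. lia.
            symmetry; apply Nat.eqb_neq; lia. symmetry; apply Nat.ltb_ge; lia. }
        rewrite <- sadd_assoc. f_equal. apply sadd_comm. }
      rewrite <- E in Hc. specialize (Hn c' Hc).
      destruct (Nat.ltb_spec i (length l1)).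
      * specialize (Hn i). unfold c' in Hn. rewrite (proj2 (Nat.ltb_lt _ _) H) in Hn.
        apply Hn. rewrite El, length_app; simpl; lia.
      * specialize (Hn (S i)). unfold c' in Hn.
        replace (Nat.ltb (S i) (length l1)) with false in Hn by (symmetry; apply Nat.ltb_ge; lia).
        replace (Nat.eqb (S i) (length l1)) with false in Hn by (symmetry; apply Nat.eqb_neq; lia).
        replace (S i - 1)%nat with i in Hn by lia. apply Hn. rewrite El, length_app; simpl; lia.
    + intros u Hu. apply in_map_iff in Hu. destruct Hu as [v [<- Hv]].
      apply inspan_add. apply inspan_In. rewrite El. apply in_app_or in Hv. apply in_or_app.
      destruct Hv; auto. right; right; auto.
      apply inspan_scal, inspan_In; auto.
    + intros u Hu. apply in_map_iff in Hu. destruct Hu as [v [<- Hv]].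
      rewrite sinn_add, sinn_scal. fold a. unfold b.
      assert (a <> RtoC 0) by auto. destruct (<< v, f >>) as [x1 x2]. destruct a as [a1 a2].
      assert (a1 * a1 + a2 * a2 <> 0).
      { intro Z. apply H. assert (a1 = 0) by nra. assert (a2 = 0) by nra. subst; auto. }
      apply cproj; simpl; field; auto.
  - exists (tl l). destruct l as [|u t]. congruence. simpl. split; [lia|split;[|split]].
    + eapply nindep_tl; eauto.
    + intros v Hv. apply inspan_In. simpl; auto.
    + intros v Hv. destruct (classic (<< v, f >> = RtoC 0)); auto. exfalso. apply Hno.
      exists v. simpl; auto.
Qed.

Lemma dim_lemma F : forall v, nindep v -> (length F <= length v)%nat ->
  exists w, length w = (length v - length F)%nat /\ nindep w /\ (forall u, In u w -> inspan v u)
    /\ (forall u, In u w -> orthL F u).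
Proof.
  induction F as [|f F IH]; intros v Hv Hl.
  - exists v. simpl. repeat split; auto. rewrite Nat.sub_0_r; auto. apply inspan_In.
    intros u _ f []. 
  - simpl in Hl. destruct (IH v Hv) as [w [Hw1 [Hw2 [Hw3 Hw4]]]]. lia.
    destruct (one_step w f Hw2) as [w' [H1 [H2 [H3 H4]]]].
    { intro Z. subst. simpl in Hw1. lia. }
    exists w'. split. simpl. lia. split; auto. split.
    + intros u Hu. eapply inspan_trans. exact Hw3. auto.
    + intros u Hu g [<-|Hg]. auto.
      apply (orthL_span F w u Hw4 (H3 u Hu)). auto.
Qed.

Lemma w_exists v F : nindep v -> (length F < length v)%nat ->
  exists x, inspan v x /\ orthL F x /\ nrm2 X x <> 0.
Proof.
  intros Hv Hl. destruct (dim_lemma F v Hv) as [w [H1 [H2 [H3 H4]]]]. lia.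
  destruct w as [|u t]. simpl in H1. lia.
  exists u. split. apply H3; simpl; auto. split. apply H4; simpl; auto.
  intro Z. specialize (H2 (fun i => if Nat.eqb i 0 then RtoC 1 else RtoC 0)).
  rewrite lsum_single in H2. specialize (H2 Z O). simpl in H2.
  assert (RtoC 1 = RtoC 0) by (apply H2; lia). injection H. lra.
Qed.

End LA.

Section V.
Variable X : SIP.
Notation "x +v y" := (sadd X x y) (at level 50, left associativity).
Notation "c · x" := (sscal X c x) (at level 40).
Notation "<< x , y >>" := (sinn X x y).
Notation "0v" := (s0 X).

Lemma ssub_self x : ssub X x x = 0v.
Proof. apply sadd_opp. Qed.

Lemma ssub_eq u v : ssub X u v = 0v -> u = v.
Proof.
  unfold ssub; intro E. rewrite <- (sadd_0 X v), <- E, <- sadd_assoc, (sadd_comm X (sopp X v) v), sadd_opp, sadd_0r. auto.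
Qed.

Lemma sinn_subl x y z : << ssub X x y, z >> = Cminus << x, z >> << y, z >>.
Proof. unfold ssub. rewrite sinn_add, sinn_opp. cgo. Qed.

Lemma sinn_subr x y z : << z, ssub X x y >> = Cminus << z, x >> << z, y >>.
Proof. unfold ssub. rewrite sinn_addr, sinn_oppr. cgo. Qed.

Lemma nrm2_sub x y : nrm2 X (ssub X x y) = nrm2 X x + nrm2 X y - 2 * Re << x, y >>.
Proof. unfold ssub. rewrite nrm2_add, nrm2_opp, sinn_oppr, re_opp. ring. Qed.

Lemma ssub_chain x y z : ssub X x z = ssub X x y +v ssub X y z.
Proof.
  unfold ssub. rewrite <- sadd_assoc. f_equal. rewrite sadd_assoc, (sadd_comm X (sopp X y) y), sadd_opp, sadd_0. auto.
Qed.

Lemma nrm_sub_tri x y z : nrm X (ssub X x z) <= nrm X (ssub X x y) + nrm X (ssub X y z).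
Proof. rewrite (ssub_chain x y z). apply nrm_triangle. Qed.

Lemma nrm_sub_sym x y : nrm X (ssub X x y) = nrm X (ssub X y x).
Proof. unfold nrm. rewrite !nrm2_sub, re_sym. f_equal; ring. Qed.

Lemma nrm_diff x y : Rabs (nrm X x - nrm X y) <= nrm X (ssub X x y).
Proof.
  assert (E1 : x = ssub X x y +v y).
  { unfold ssub. rewrite <- sadd_assoc, (sadd_comm X (sopp X y) y), sadd_opp, sadd_0r; auto. }
  assert (E2 : y = ssub X y x +v x).
  { unfold ssub. rewrite <- sadd_assoc, (sadd_comm X (sopp X x) x), sadd_opp, sadd_0r; auto. }
  pose proof (nrm_triangle X (ssub X x y) y). rewrite <- E1 in H.
  pose proof (nrm_triangle X (ssub X y x) x). rewrite <- E2 in H0.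
  rewrite (nrm_sub_sym y x) in H0. apply Rabs_le; lra.
Qed.

Lemma nrm_lt_iff x e : 0 < e -> nrm2 X x < e * e -> nrm X x < e.
Proof.
  intros He Hx. unfold nrm. rewrite <- (sqrt_square e) by lra. apply sqrt_lt_1_alt. split.
  apply nrm2_pos. lra.
Qed.

Lemma nrm2_le_of_nrm x e : nrm X x <= e -> nrm2 X x <= e * e.
Proof. intro H. rewrite <- nrm_sq. pose proof (nrm_pos X x). nra. Qed.

Lemma nrm_scal_real (r : R) x : nrm X ((RtoC r) · x) = Rabs r * nrm X x.
Proof.
  unfold nrm. rewrite nrm2_scal. simpl Re; simpl Im. rewrite sqrt_mult_alt. f_equal.
  replace (r ^ 2 + 0 ^ 2) with (Rsqr r) by (unfold Rsqr; ring). apply sqrt_Rsqr_abs.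
  nra.
Qed.

Lemma sscal_sub (r : C) x y : ssub X (r · x) (r · y) = r · (ssub X x y).
Proof. unfold ssub. rewrite sscal_distr_l, !sopp_scal, !sscal_assoc. f_equal. f_equal. cgo. Qed.

Lemma ssub_scal_r (a b : C) x : ssub X (a · x) (b · x) = (Cminus a b) · x.
Proof. unfold ssub. rewrite sopp_scal, sscal_assoc, <- sscal_distr_r. f_equal. cgo. Qed.

End V.

Definition tz (r : nat -> R) := forall e, 0 < e -> exists N, forall n, (N <= n)%nat -> r n < e.

Lemma tz_le (r q : nat -> R) : tz q -> (forall n, r n <= q n) -> tz r.
Proof. intros Hq Hle e He. destruct (Hq e He) as [N HN]. exists N. intros n Hn. specialize (HN n Hn). specialize (Hle n). lra. Qed.

Lemma tz_plus (r q : nat -> R) : tz r -> tz q -> tz (fun n => r n + q n).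
Proof.
  intros Hr Hq e He. destruct (Hr (e/2)) as [N1 H1]; try lra. destruct (Hq (e/2)) as [N2 H2]; try lra.
  exists (N1 + N2)%nat. intros n Hn. specialize (H1 n ltac:(lia)). specialize (H2 n ltac:(lia)). lra.
Qed.

Lemma tz_scal (c : R) (r : nat -> R) : 0 <= c -> tz r -> tz (fun n => c * r n).
Proof.
  intros Hc Hr e He. destruct (Hr (e / (c + 1))) as [N HN]. apply Rdiv_lt_0_compat; lra.
  exists N. intros n Hn. specialize (HN n Hn).
  assert (c * r n <= c * (e / (c+1))).
  { destruct (Rle_dec (r n) (e/(c+1))). apply Rmult_le_compat_l; lra. lra. }
  assert (c * (e / (c+1)) < e). { unfold Rdiv. apply (Rmult_lt_reg_r (c+1)). lra.
    rewrite Rmult_assoc, Rmult_assoc, Rinv_l by lra. nra. }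
  lra.
Qed.

Lemma tz_const_le (c : R) (r : nat -> R) : tz r -> (forall n, c <= r n) -> c <= 0.
Proof.
  intros Hr Hc. destruct (Rle_dec c 0); auto. destruct (Hr c) as [N HN]; try lra.
  specialize (HN N (le_n N)). specialize (Hc N). lra.
Qed.

Lemma tz_inv (c : R) : 0 <= c -> tz (fun n => c / INR (S n)).
Proof.
  intros Hc e He. destruct (INR_unbounded (c / e)) as [N Hup].
  exists N. intros n Hn.
  assert (INR N <= INR n) by (apply le_INR; auto).
  rewrite S_INR. apply (Rmult_lt_reg_r (INR n + 1)). pose proof (pos_INR n); lra.
  unfold Rdiv. rewrite Rmult_assoc, Rinv_l by (pose proof (pos_INR n); lra). rewrite Rmult_1_r.
  assert (c < e * (INR n + 1)).
  { apply (Rmult_lt_reg_r (/ e)). apply Rinv_0_lt_compat; lra.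
    replace (e * (INR n + 1) * / e) with (INR n + 1) by (field; lra). unfold Rdiv in Hup. lra. }
  lra.
Qed.

Lemma tz_sub (r : nat -> R) (phi : nat -> nat) : tz r -> (forall n, (n <= phi n)%nat) -> tz (fun n => r (phi n)).
Proof. intros Hr Hp e He. destruct (Hr e He) as [N HN]. exists N. intros n Hn. apply HN. specialize (Hp n). lia. Qed.

Lemma incr_ge (phi : nat -> nat) : (forall n, (phi n < phi (S n))%nat) -> forall n, (n <= phi n)%nat.
Proof. intros H n. induction n. lia. specialize (H n). lia. Qed.

Lemma tz_sqrt (r : nat -> R) : tz r -> tz (fun n => sqrt (Rmax 0 (r n))).
Proof.
  intros Hr e He. destruct (Hr (e * e)) as [N HN]. nra. exists N. intros n Hn. specialize (HN n Hn).
  rewrite <- (sqrt_square e) by lra. apply sqrt_lt_1_alt. split. apply Rmax_l.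
  unfold Rmax. destruct (Rle_dec 0 (r n)); nra.
Qed.

Section Ops.
Variables X Y : SIP.
Definition linear (T : X -> Y) := (forall x y, T (sadd X x y) = sadd Y (T x) (T y)) /\
  (forall a x, T (sscal X a x) = sscal Y a (T x)).
Definition adj (T : X -> Y) (Ts : Y -> X) := forall x y, sinn Y (T x) y = sinn X x (Ts y).
Definition bnd (T : X -> Y) (C : R) := forall x, nrm2 Y (T x) <= C * nrm2 X x.
Definition cv (u : nat -> Y) (l : Y) := forall e, 0 < e -> exists N, forall n, (N <= n)%nat -> nrm Y (ssub Y (u n) l) < e.
Definition cpt (T : X -> Y) := forall u : nat -> X, (exists M, forall n, nrm X (u n) <= M) ->
  exists (phi : nat -> nat) (l : Y), (forall n, (phi n < phi (S n))%nat) /\ cv (fun n => T (u (phi n))) l.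

Lemma lin_0 T : linear T -> T (s0 X) = s0 Y.
Proof. intros [_ Hs]. rewrite <- (sscal_0 X (s0 X)), Hs, sscal_0. auto. Qed.

Lemma lin_opp T x : linear T -> T (sopp X x) = sopp Y (T x).
Proof. intros [Ha Hs]. rewrite sopp_scal, Hs, <- sopp_scal. auto. Qed.

Lemma lin_sub T x y : linear T -> T (ssub X x y) = ssub Y (T x) (T y).
Proof. intros HT. unfold ssub. rewrite (proj1 HT), lin_opp; auto. Qed.

Lemma lin_lsum T l c : linear T -> T (lsum X l c) = lsum Y (map T l) c.
Proof.
  intros HT. revert c. induction l; simpl; intros. apply lin_0; auto.
  rewrite (proj1 HT), (proj2 HT), IHl. auto.
Qed.

Lemma adj_sym T Ts : adj T Ts -> forall x y, sinn X (Ts y) x = sinn Y y (T x).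
Proof. intros H x y. rewrite sinn_conj, <- H, <- sinn_conj. auto. Qed.

End Ops.

Definition sdef (X : SIP) := forall x : X, nrm2 X x = 0 -> x = s0 X.

Lemma def_of_orth (X : SIP) (Xd : sdef X) (u v : X) : (forall x, sinn X x (ssub X u v) = RtoC 0) -> u = v.
Proof.
  intros H. apply ssub_eq. apply Xd. apply nrm2_zero_iff_inn. apply H.
Qed.

Lemma adj_linear (X Y : SIP) (Xd : sdef X) (T : X -> Y) Ts : linear X Y T -> adj X Y T Ts -> linear Y X Ts.
Proof.
  intros HT Ha. split.
  - intros x y. apply def_of_orth; auto. intro z. rewrite sinn_subr, sinn_addr, <- !Ha, sinn_addr. cgo.
  - intros a x. apply def_of_orth; auto. intro z. rewrite sinn_subr, sinn_scalr, <- !Ha, sinn_scalr. cgo.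
Qed.

Lemma nrm2_0 (X : SIP) : nrm2 X (s0 X) = 0.
Proof. unfold nrm2. rewrite sinn_0l. auto. Qed.

Section Spec.
Variables X Y : SIP.
Hypothesis Xd : sdef X.
Variable T : X -> Y.
Variable Ts : Y -> X.
Hypothesis HT : linear X Y T.
Hypothesis Ha : adj X Y T Ts.
Variable C : R.
Hypothesis HC : 0 < C.
Hypothesis Hb : bnd X Y T C.
Definition SS := fun x => Ts (T x).
Hypothesis Hc : cpt X X SS.

Lemma HTs : linear Y X Ts.
Proof. apply (adj_linear X Y Xd T); auto. Qed.

Lemma HS : linear X X SS.
Proof.
  pose proof HTs as [A1 A2]. destruct HT as [B1 B2]. split; intros; unfold SS.
  rewrite B1, A1; auto. rewrite B2, A2; auto.
Qed.

Lemma S_self x y : sinn X (SS x) y = sinn X x (SS y).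
Proof. unfold SS. rewrite adj_sym with (T := T) by auto. apply Ha. Qed.

Lemma nrm2_T x : nrm2 Y (T x) = Re (sinn X (SS x) x).
Proof. unfold nrm2, SS. rewrite Ha, re_sym. auto. Qed.

Lemma S_bnd x : nrm2 X (SS x) <= C * C * nrm2 X x.
Proof.
  assert (E : nrm2 X (SS x) = Re (sinn Y (T x) (T (SS x)))).
  { unfold nrm2 at 1. unfold SS at 1. rewrite adj_sym with (T := T) by auto. reflexivity. }
  pose proof (amgm Y (T x) (T (SS x)) C HC).
  pose proof (Hb x). pose proof (Hb (SS x)).
  assert (nrm2 Y (T (SS x)) / C <= nrm2 X (SS x)).
  { apply (Rmult_le_reg_r C); auto. unfold Rdiv. rewrite Rmult_assoc, Rinv_l by lra. lra. }
  nra.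
Qed.

Lemma nrm_S x : nrm X (SS x) <= C * nrm X x.
Proof.
  unfold nrm. rewrite <- (sqrt_square C) at 1 by lra. rewrite <- sqrt_mult_alt by nra.
  apply sqrt_le_1_alt. pose proof (S_bnd x). nra.
Qed.

Definition eig (e : list X) := forall u, In u e -> exists mu : R, SS u = sscal X (RtoC mu) u.

Lemma W_inv e x : eig e -> orthL X e x -> orthL X e (SS x).
Proof.
  intros He Hx f Hf. rewrite S_self. destruct (He f Hf) as [mu ->]. rewrite sinn_scalr, Hx; auto. cgo.
Qed.

Lemma T_zero x : nrm2 X x = 0 -> nrm2 Y (T x) = 0.
Proof. intro H. rewrite (Xd x H), lin_0; auto. apply nrm2_0. Qed.

Definition nz (u : X) := sscal X (RtoC (/ nrm X u)) u.

Lemma nz_props u : 0 < nrm2 X u -> nrm2 X (nz u) = 1 /\ nrm2 Y (T (nz u)) = nrm2 Y (T u) / nrm2 X u.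
Proof.
  intros Hu. unfold nz. rewrite (proj2 HT), !nrm2_scal. simpl.
  rewrite <- (nrm_sq X u). assert (0 < nrm X u).
  { unfold nrm. apply sqrt_lt_R0; auto. }
  split; field; lra.
Qed.

Lemma orthL_scal e c x : orthL X e x -> orthL X e (sscal X c x).
Proof. intros H f Hf. rewrite sinn_scal, H; auto. cgo. Qed.

Lemma MAX e a : eig e -> 0 < a -> (exists x, orthL X e x /\ nrm2 Y (T x) > a * nrm2 X x) ->
  exists z M, orthL X e z /\ nrm2 X z = 1 /\ a < M /\ SS z = sscal X (RtoC M) z.
Proof.
  intros He Hapos [x0 [Hx0 Hx0T]].
  assert (Hx0p : 0 < nrm2 X x0).
  { destruct (Rle_lt_or_eq_dec 0 (nrm2 X x0) (nrm2_pos X x0)); auto.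
    rewrite T_zero in Hx0T by auto. rewrite <- e0 in Hx0T. lra. }
  set (E := fun r => exists x, orthL X e x /\ nrm2 X x = 1 /\ r = nrm2 Y (T x)).
  assert (Ebound : bound E).
  { exists C. intros r [x [_ [Hx ->]]]. pose proof (Hb x) as HH. rewrite Hx in HH. lra. }
  assert (Ene : exists r, E r).
  { exists (nrm2 Y (T (nz x0))). exists (nz x0). split. apply orthL_scal; auto.
    split; auto. apply nz_props; auto. }
  destruct (completeness E Ebound Ene) as [M [HM1 HM2]].
  assert (HMa : a < M).
  { assert (E (nrm2 Y (T (nz x0)))). { exists (nz x0). split. apply orthL_scal; auto. split; auto. apply nz_props; auto. }
    apply HM1 in H. destruct (nz_props x0 Hx0p) as [_ E2]. rewrite E2 in H.
    assert (a < nrm2 Y (T x0) / nrm2 X x0).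
    { apply (Rmult_lt_reg_r (nrm2 X x0)); auto. unfold Rdiv. rewrite Rmult_assoc, Rinv_l by lra. lra. }
    lra. }
  assert (HMpos : 0 < M) by lra.
  assert (hom : forall u, orthL X e u -> nrm2 Y (T u) <= M * nrm2 X u).
  { intros u Hu. destruct (Rle_lt_or_eq_dec 0 (nrm2 X u) (nrm2_pos X u)).
    - assert (E (nrm2 Y (T (nz u)))). { exists (nz u). split. apply orthL_scal; auto. split; auto. apply nz_props; auto. }
      apply HM1 in H. destruct (nz_props u r) as [_ E2]. rewrite E2 in H.
      apply (Rmult_le_reg_r (/ nrm2 X u)). apply Rinv_0_lt_compat; auto.
      rewrite Rmult_assoc, Rinv_r by lra. lra.
    - rewrite T_zero by auto. rewrite <- e0. lra. }
  assert (seq : forall n : nat, exists x, orthL X e x /\ nrm2 X x = 1 /\ M - / INR (S n) < nrm2 Y (T x)).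
  { intro n. apply NNPP. intro Hn. assert (M <= M - / INR (S n)).
    { apply HM2. intros r [x [H1 [H2 ->]]]. destruct (Rle_dec (nrm2 Y (T x)) (M - / INR (S n))); auto.
      exfalso. apply Hn. exists x. split; auto. split; auto. lra. }
    assert (0 < / INR (S n)). { apply Rinv_0_lt_compat. apply lt_0_INR. lia. } lra. }
  set (xs := fun n => proj1_sig (constructive_indefinite_description _ (seq n))).
  assert (Hxs : forall n, orthL X e (xs n) /\ nrm2 X (xs n) = 1 /\ M - / INR (S n) < nrm2 Y (T (xs n))).
  { intro n. unfold xs. destruct (constructive_indefinite_description _ (seq n)); simpl; auto. }
  assert (key : forall x, orthL X e x -> nrm2 X x = 1 ->
            nrm2 X (ssub X (SS x) (sscal X (RtoC M) x)) <= M * (M - nrm2 Y (T x))).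
  { intros x Hx Hx1. rewrite nrm2_sub, nrm2_scal, re_scalr_real. simpl Re; simpl Im. rewrite Hx1.
    rewrite <- nrm2_T.
    assert (nrm2 X (SS x) <= M * nrm2 Y (T x)).
    { assert (Ee : nrm2 X (SS x) = Re (sinn Y (T x) (T (SS x)))).
      { unfold nrm2 at 1. unfold SS at 1. rewrite adj_sym with (T := T) by auto. reflexivity. }
      pose proof (amgm Y (T x) (T (SS x)) M HMpos).
      pose proof (hom (SS x) (W_inv e x He Hx)).
      assert (nrm2 Y (T (SS x)) / M <= nrm2 X (SS x)).
      { apply (Rmult_le_reg_r M); auto. unfold Rdiv. rewrite Rmult_assoc, Rinv_l by lra. lra. }
      lra. }
    nra. }
  destruct (Hc xs) as [phi [l [Hphi Hcv]]].
  { exists 1. intro n. unfold nrm. rewrite (proj1 (proj2 (Hxs n))), sqrt_1. lra. }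
  set (z := sscal X (RtoC (/ M)) l).
  set (an := fun n => sqrt (Rmax 0 (M / INR (S (phi n))))).
  set (bn := fun n => nrm X (ssub X (SS (xs (phi n))) l)).
  set (dn := fun n => nrm X (ssub X (xs (phi n)) z)).
  assert (Ha_n : forall n, nrm X (ssub X (SS (xs (phi n))) (sscal X (RtoC M) (xs (phi n)))) <= an n).
  { intro n. unfold an, nrm. apply sqrt_le_1_alt. destruct (Hxs (phi n)) as [h1 [h2 h3]].
    pose proof (key _ h1 h2). assert (M * (M - nrm2 Y (T (xs (phi n)))) <= M / INR (S (phi n))).
    { unfold Rdiv. assert (M - nrm2 Y (T (xs (phi n))) <= / INR (S (phi n))) by lra.
      apply Rmult_le_compat_l; lra. }
    pose proof (Rmax_r 0 (M / INR (S (phi n)))). lra. }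
  assert (tza : tz an).
  { apply (tz_sqrt (fun n => M / INR (S (phi n)))).
    apply (tz_sub (fun n => M / INR (S n)) phi). apply tz_inv; lra. apply incr_ge; auto. }
  assert (tzb : tz bn). { intros ep Hep. apply Hcv; auto. }
  assert (Hd : forall n, dn n <= / M * (an n + bn n)).
  { intro n. unfold dn.
    assert (E1 : nrm X (ssub X (xs (phi n)) z) = / M * nrm X (ssub X (sscal X (RtoC M) (xs (phi n))) l)).
    { assert (l = sscal X (RtoC M) z).
      { unfold z. rewrite sscal_assoc. replace (Cmult (RtoC M) (RtoC (/ M))) with (RtoC 1).
        rewrite sscal_1; auto. apply cproj; simpl; field; lra. }
      rewrite H. rewrite sscal_sub, nrm_scal_real, Rabs_right by lra.
      field. lra. }
    rewrite E1. apply Rmult_le_compat_l. left; apply Rinv_0_lt_compat; lra.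
    eapply Rle_trans. apply (nrm_sub_tri X _ (SS (xs (phi n)))).
    rewrite nrm_sub_sym. pose proof (Ha_n n). unfold bn. lra. }
  assert (tzd : tz dn).
  { eapply tz_le. 2: exact Hd. apply tz_scal. left; apply Rinv_0_lt_compat; lra. apply tz_plus; auto. }
  assert (dpos : forall n, 0 <= dn n) by (intro; apply nrm_pos).
  exists z, M. split; [|split; [|split]]; auto.
  - intros f Hf.
    assert (Hle : forall n, Cmod (sinn X z f) <= dn n * nrm X f).
    { intro n. assert (sinn X z f = sinn X (ssub X z (xs (phi n))) f).
      { rewrite sinn_subl. rewrite (proj1 (Hxs (phi n)) f Hf). cgo. }
      rewrite H. unfold dn. rewrite nrm_sub_sym. apply cmod_inn. }
    assert (Cmod (sinn X z f) <= 0).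
    { apply (tz_const_le _ (fun n => nrm X f * dn n)). apply tz_scal; auto. apply nrm_pos.
      intro n. rewrite Rmult_comm. auto. }
    pose proof (Cmod_ge_0 (sinn X z f)). apply Cmod_eq_0. lra.
  - assert (Hle : forall n, Rabs (nrm X z - 1) <= dn n).
    { intro n. replace 1 with (nrm X (xs (phi n))). unfold dn. rewrite nrm_sub_sym. apply nrm_diff.
      unfold nrm. rewrite (proj1 (proj2 (Hxs (phi n)))). apply sqrt_1. }
    assert (Rabs (nrm X z - 1) <= 0). { apply (tz_const_le _ dn); auto. }
    pose proof (Rabs_pos (nrm X z - 1)). assert (nrm X z = 1).
    { destruct (Rcase_abs (nrm X z - 1)). rewrite Rabs_left in H by auto. lra. rewrite Rabs_right in H by auto. lra. }
    rewrite <- nrm_sq, H1. ring.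
  - apply ssub_eq. apply Xd.
    assert (Hle : forall n, nrm X (ssub X (SS z) (sscal X (RtoC M) z)) <= (C + M) * dn n + an n).
    { intro n. eapply Rle_trans. apply (nrm_sub_tri X _ (SS (xs (phi n)))).
      eapply Rle_trans. apply Rplus_le_compat_l. apply (nrm_sub_tri X _ (sscal X (RtoC M) (xs (phi n)))).
      rewrite <- (lin_sub X X SS) by apply HS. rewrite sscal_sub, nrm_scal_real, Rabs_right by lra.
      pose proof (nrm_S (ssub X z (xs (phi n)))). rewrite (nrm_sub_sym X z) in H. fold (dn n) in H.
      pose proof (Ha_n n). unfold dn in *. lra. }
    assert (nrm X (ssub X (SS z) (sscal X (RtoC M) z)) <= 0).
    { apply (tz_const_le _ (fun n => (C + M) * dn n + an n)); auto. apply tz_plus; auto. apply tz_scal; auto. lra. }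
    pose proof (nrm_pos X (ssub X (SS z) (sscal X (RtoC M) z))).
    rewrite <- nrm_sq. assert (nrm X (ssub X (SS z) (sscal X (RtoC M) z)) = 0) by lra. rewrite H1. ring.
Qed.

End Spec.

Fixpoint ONL (X : SIP) (l : list X) : Prop :=
  match l with nil => True | u :: t => nrm2 X u = 1 /\ (forall v, In v t -> sinn X u v = RtoC 0) /\ ONL X t end.

Lemma ONL_app1 (X : SIP) e z : ONL X e -> nrm2 X z = 1 -> orthL X e z -> ONL X (e ++ z :: nil).
Proof.
  induction e; simpl; intros.
  - split; [auto| split; [intros v Hv; destruct Hv| exact I]].
  - destruct H as [h1 [h2 h3]]. split; auto. split.
    + intros v Hv. apply in_app_or in Hv. destruct Hv as [Hv|[<-|[]]]; auto.
      rewrite sinn_conj, H1; simpl; auto. cgo.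
    + apply IHe; auto. intros f Hf. apply H1; simpl; auto.
Qed.


Lemma cons_decomp (X : SIP) (u : X) t x' :
  (forall v, In v t -> sinn X u v = RtoC 0) -> inspan X t x' ->
  sinn X u x' = RtoC 0.
Proof. intros H Hx. apply (orth_span X t u H x' Hx). Qed.

Lemma lsum_inspan (X : SIP) t c : inspan X t (lsum X t c).
Proof. exists c; auto. Qed.

Lemma nrm2_cons (X : SIP) (u x' : X) c0 : sinn X u x' = RtoC 0 ->
  nrm2 X (sadd X (sscal X c0 u) x') = (Re c0 ^ 2 + Im c0 ^ 2) * nrm2 X u + nrm2 X x'.
Proof.
  intro H. rewrite nrm2_add, nrm2_scal, sinn_scal, H. simpl. ring.
Qed.

Lemma cmod2_zero (c : C) : Re c ^ 2 + Im c ^ 2 = 0 -> c = RtoC 0.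
Proof. destruct c as [a b]; simpl; intro. apply cproj; simpl; nra. Qed.

Lemma ONL_nindep (X : SIP) e : ONL X e -> nindep X e.
Proof.
  induction e as [|u t IH]; intros H c Hc i Hi; simpl in Hi. lia.
  simpl in H, Hc. destruct H as [h1 [h2 h3]].
  rewrite nrm2_cons in Hc by (apply cons_decomp with (t := t); auto; apply lsum_inspan).
  rewrite h1 in Hc. pose proof (nrm2_pos X (lsum X t (fun i => c (S i)))).
  pose proof (pow2_ge_0 (Re (c O))). pose proof (pow2_ge_0 (Im (c O))).
  destruct i. apply cmod2_zero. lra.
  apply (IH h3 (fun i => c (S i))). lra. lia.
Qed.

Section Spec2.
Variables X Y : SIP.
Hypothesis Xd : sdef X.
Variable T : X -> Y.
Variable Ts : Y -> X.
Hypothesis HT : linear X Y T.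
Hypothesis Ha : adj X Y T Ts.
Variable C : R.
Hypothesis HC : 0 < C.
Hypothesis Hb : bnd X Y T C.
Hypothesis Hc : cpt X X (SS X Y T Ts).
Variable a : R.
Hypothesis Hapos : 0 < a.

Notation SO := (SS X Y T Ts).

Definition EIGa (e : list X) := forall u, In u e -> exists mu, a < mu /\ SO u = sscal X (RtoC mu) u.

Definition Pz (e : list X) (z : X) := nrm2 X z = 1 /\ orthL X e z /\ exists mu, a < mu /\ SO z = sscal X (RtoC mu) z.

Definition nextz (e : list X) : X := epsilon (inhabits (s0 X)) (Pz e).

Fixpoint EL (n : nat) : list X :=
  match n with O => nil | S m => let e := EL m in
    if excluded_middle_informative (exists z, Pz e z) then e ++ nextz e :: nil else e end.

Lemma EL_inv n : ONL X (EL n) /\ EIGa (EL n).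
Proof.
  induction n; simpl. split; simpl; auto. intros u [].
  destruct IHn as [I1 I2].
  destruct (excluded_middle_informative (exists z, Pz (EL n) z)); auto.
  pose proof (epsilon_spec (inhabits (s0 X)) (Pz (EL n)) e) as [P1 [P2 P3]]. fold (nextz (EL n)) in *.
  split. apply ONL_app1; auto.
  intros u Hu. apply in_app_or in Hu. destruct Hu as [Hu|[<-|[]]]; auto.
Qed.

Lemma nrm_1 (x : X) : nrm2 X x = 1 -> nrm X x = 1.
Proof. intro H. unfold nrm. rewrite H. apply sqrt_1. Qed.

Lemma EL_stops : exists n, ~ exists z, Pz (EL n) z.
Proof.
  apply NNPP. intro Hall.
  assert (Hs : forall n, exists z, Pz (EL n) z).
  { intro n. apply NNPP. intro H. apply Hall. exists n. auto. }
  set (zz := fun n => nextz (EL n)).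
  assert (Hz : forall n, Pz (EL n) (zz n)).
  { intro n. apply (epsilon_spec (inhabits (s0 X)) (Pz (EL n)) (Hs n)). }
  assert (HEL : forall n, EL (S n) = EL n ++ zz n :: nil).
  { intro n. simpl. destruct (excluded_middle_informative _); auto. exfalso; auto. }
  assert (Hin : forall n m, (n < m)%nat -> In (zz n) (EL m)).
  { intros n m Hnm. induction m. lia. rewrite HEL. apply in_or_app.
    destruct (Nat.eq_dec n m). subst. right; simpl; auto. left. apply IHm. lia. }
  destruct (Hc zz) as [phi [l [Hphi Hcv]]].
  { exists 1. intro n. destruct (Hz n) as [h _]. rewrite nrm_1; auto. lra. }
  destruct (Hcv (a/2)) as [N HN]. lra.
  pose proof (HN N (le_n _)) as H1. pose proof (HN (S N) ltac:(lia)) as H2.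
  set (i := phi N) in *. set (j := phi (S N)) in *.
  assert (Hij : (i < j)%nat) by apply Hphi.
  pose proof (nrm_sub_tri X (SO (zz i)) l (SO (zz j))) as H3.
  rewrite (nrm_sub_sym X l) in H3.
  destruct (Hz i) as [hi1 [hi2 [mi [hmi Si]]]]. destruct (Hz j) as [hj1 [hj2 [mj [hmj Sj]]]].
  assert (Horth : sinn X (zz i) (zz j) = RtoC 0).
  { rewrite sinn_conj. rewrite (hj2 (zz i)). cgo. apply Hin; auto. }
  assert (E : nrm2 X (ssub X (SO (zz i)) (SO (zz j))) = mi * mi + mj * mj).
  { rewrite Si, Sj, nrm2_sub, !nrm2_scal, hi1, hj1, sinn_scal, sinn_scalr, Horth. simpl. ring. }
  assert (nrm X (ssub X (SO (zz i)) (SO (zz j))) < a) by lra.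
  assert (nrm2 X (ssub X (SO (zz i)) (SO (zz j))) < a * a).
  { rewrite <- nrm_sq. pose proof (nrm_pos X (ssub X (SO (zz i)) (SO (zz j)))). nra. }
  nra.
Qed.

Lemma SPEC : exists e, ONL X e /\ EIGa e /\ forall x, orthL X e x -> nrm2 Y (T x) <= a * nrm2 X x.
Proof.
  destruct EL_stops as [n Hn]. destruct (EL_inv n) as [I1 I2].
  exists (EL n). split; auto. split; auto. intros x Hx.
  destruct (Rle_dec (nrm2 Y (T x)) (a * nrm2 X x)) as [|Hgt]; auto. exfalso.
  destruct (MAX X Y Xd T Ts HT Ha C HC Hb Hc (EL n) a) as [z [M [h1 [h2 [h3 h4]]]]]; auto.
  { intros u Hu. destruct (I2 u Hu) as [mu [_ Hmu]]. eauto. }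
  { exists x. split; auto. lra. }
  apply Hn. exists z. split; auto. split; auto. exists M; auto.
Qed.

Lemma T_cross (u x' : X) (mu : R) : SO u = sscal X (RtoC mu) u -> sinn X u x' = RtoC 0 ->
  sinn Y (T u) (T x') = RtoC 0.
Proof.
  intros Hu H. rewrite Ha. fold (SO x'). rewrite <- S_self by auto. rewrite Hu, sinn_scal, H. cgo.
Qed.

Lemma S_cross (u x' : X) (mu : R) : SO u = sscal X (RtoC mu) u -> sinn X u x' = RtoC 0 ->
  sinn X u (SO x') = RtoC 0.
Proof.
  intros Hu H. rewrite <- S_self by auto. rewrite Hu, sinn_scal, H. cgo.
Qed.

Lemma nrm2_Tu (u : X) mu : SO u = sscal X (RtoC mu) u -> nrm2 Y (T u) = mu * nrm2 X u.
Proof. intros Hu. rewrite nrm2_T with (Ts := Ts) by auto. rewrite Hu, re_scal_real. auto. Qed.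

Lemma spec_ind e : ONL X e -> EIGa e -> forall c, let x := lsum X e c in
  0 <= nrm2 Y (T x) - a * nrm2 X x /\ (nrm2 Y (T x) - a * nrm2 X x = 0 -> nrm2 X x = 0) /\
  0 <= nrm2 X (SO x) - a * nrm2 Y (T x) /\ (nrm2 X (SO x) - a * nrm2 Y (T x) = 0 -> nrm2 Y (T x) = 0).
Proof.
  induction e as [|u t IH]; intros Ho He c x; unfold x; clear x; simpl.
  - rewrite (lin_0 X Y T HT), (lin_0 X X SO (HS X Y Xd T Ts HT Ha)), !nrm2_0. lra.
  - destruct Ho as [h1 [h2 h3]].
    assert (He' : EIGa t) by (intros v Hv; apply He; simpl; auto).
    destruct (He u (or_introl eq_refl)) as [mu [Hmu Su]].
    specialize (IH h3 He' (fun i => c (S i))). simpl in IH.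
    set (x' := lsum X t (fun i => c (S i))) in *.
    assert (O1 : sinn X u x' = RtoC 0) by (apply cons_decomp with (t := t); auto; apply lsum_inspan).
    rewrite nrm2_cons by auto.
    rewrite (proj1 HT), (proj2 HT).
    rewrite (nrm2_cons Y) by (apply T_cross with mu; auto).
    rewrite (proj1 (HS X Y Xd T Ts HT Ha)), (proj2 (HS X Y Xd T Ts HT Ha)).
    rewrite Su, sscal_assoc. rewrite nrm2_add, nrm2_scal, sinn_scal.
    rewrite (S_cross u x' mu Su O1). rewrite (nrm2_Tu u mu Su), h1.
    pose proof (pow2_ge_0 (Re (c O))). pose proof (pow2_ge_0 (Im (c O))).
    set (k := Re (c O) ^ 2 + Im (c O) ^ 2).
    assert (Ek : Re (Cmult (c O) (RtoC mu)) ^ 2 + Im (Cmult (c O) (RtoC mu)) ^ 2 = k * (mu * mu)).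
    { unfold k. destruct (c O); simpl. ring. }
    rewrite Ek. replace (Re (Cmult (Cmult (c O) (RtoC mu)) (RtoC 0))) with 0 by (destruct (c O); simpl; ring).
    rewrite !Rmult_1_r, Rmult_0_r, Rplus_0_r.
    assert (0 <= k) by (unfold k; lra).
    destruct IH as [I1 [I2 [I3 I4]]].
    assert (0 <= k * (mu - a)) by (apply Rmult_le_pos; lra).
    assert (0 <= k * mu * (mu - a)) by (apply Rmult_le_pos; [apply Rmult_le_pos|]; lra).
    repeat split.
    + nra.
    + intro Z. assert (Z1 : k * (mu - a) = 0) by nra. assert (Z2 : k = 0).
      { destruct (Rmult_integral _ _ Z1); auto. lra. }
      rewrite Z2. assert (Z3 : nrm2 X x' = 0). apply I2. rewrite Z2 in Z. lra. rewrite Z3. ring.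
    + nra.
    + intro Z. assert (Z1 : k * mu * (mu - a) = 0) by nra. assert (Z2 : k = 0).
      { destruct (Rmult_integral _ _ Z1) as [H5|H5]. destruct (Rmult_integral _ _ H5); auto. lra. lra. }
      rewrite Z2. assert (Z3 : nrm2 Y (T x') = 0). apply I4. rewrite Z2 in Z. lra. rewrite Z3. ring.
Qed.

Lemma SPEC_span e : ONL X e -> EIGa e -> forall x, inspan X e x -> nrm2 X x <> 0 -> nrm2 Y (T x) > a * nrm2 X x.
Proof.
  intros Ho He x [c ->] Hn. destruct (spec_ind e Ho He c) as [I1 [I2 _]].
  destruct (Rle_lt_or_eq_dec _ _ I1); [lra|]. exfalso. apply Hn. apply I2. auto.
Qed.

Lemma img_span e : ONL X e -> EIGa e -> forall y, inspan Y (map T e) y -> nrm2 Y y <> 0 -> nrm2 X (Ts y) > a * nrm2 Y y.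
Proof.
  intros Ho He y [c ->] Hn. rewrite <- lin_lsum in * by auto.
  destruct (spec_ind e Ho He c) as [_ [_ [I3 I4]]]. unfold SS in *.
  destruct (Rle_lt_or_eq_dec _ _ I3); [lra|]. exfalso. apply Hn. apply I4. auto.
Qed.

Lemma img_nindep e : ONL X e -> EIGa e -> nindep Y (map T e).
Proof.
  induction e as [|u t IH]; intros Ho He c Hcz i Hi; simpl in Hi. lia.
  simpl in Ho, Hcz. destruct Ho as [h1 [h2 h3]].
  destruct (He u (or_introl eq_refl)) as [mu [Hmu Su]].
  assert (He' : EIGa t) by (intros v Hv; apply He; simpl; auto).
  rewrite <- lin_lsum in Hcz by auto.
  assert (O1 : sinn X u (lsum X t (fun i => c (S i))) = RtoC 0) by (apply cons_decomp with (t := t); auto; apply lsum_inspan).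
  rewrite (nrm2_cons Y) in Hcz by (apply T_cross with mu; auto).
  rewrite (nrm2_Tu u mu Su), h1 in Hcz.
  pose proof (nrm2_pos Y (T (lsum X t (fun i => c (S i))))).
  pose proof (pow2_ge_0 (Re (c O))). pose proof (pow2_ge_0 (Im (c O))).
  assert (0 <= (Re (c O) ^ 2 + Im (c O) ^ 2) * (mu * 1)) by (apply Rmult_le_pos; lra).
  destruct i.
  - apply cmod2_zero. assert ((Re (c O) ^ 2 + Im (c O) ^ 2) * (mu * 1) = 0) by lra.
    destruct (Rmult_integral _ _ H3); auto. lra.
  - apply (IH h3 He' (fun i => c (S i))). rewrite <- lin_lsum by auto. lra. rewrite length_map in Hi. rewrite length_map. lia.
Qed.

Lemma adjF e : ONL X e -> EIGa e -> (forall x, orthL X e x -> nrm2 Y (T x) <= a * nrm2 X x) ->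
  forall y, orthL Y (map T e) y -> nrm2 X (Ts y) <= a * nrm2 Y y.
Proof.
  intros Ho He Hsp y Hy. set (w := Ts y).
  assert (Hw : orthL X e w).
  { intros f Hf. unfold w. rewrite adj_sym with (T := T) by auto. apply Hy. apply in_map; auto. }
  pose proof (Hsp w Hw).
  assert (E : nrm2 X w = Re (sinn Y y (T w))).
  { unfold nrm2 at 1. unfold w at 1. rewrite adj_sym with (T := T) by auto. reflexivity. }
  pose proof (amgm Y y (T w) a Hapos).
  assert (nrm2 Y (T w) / a <= nrm2 X w).
  { apply (Rmult_le_reg_r a); auto. unfold Rdiv. rewrite Rmult_assoc, Rinv_l by lra. lra. }
  lra.
Qed.

End Spec2.

Lemma CMP (X : SIP) (F v : list X) (q : X -> R) b :
  (forall x, orthL X F x -> q x <= b * nrm2 X x) -> nindep X v ->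
  (forall x, inspan X v x -> orthL X F x -> nrm2 X x <> 0 -> q x > b * nrm2 X x) ->
  (length v <= length F)%nat.
Proof.
  intros H1 H2 H3. destruct (Compare_dec.le_lt_dec (length v) (length F)); auto. exfalso.
  destruct (w_exists X v F H2 l) as [x [h1 [h2 h3]]].
  specialize (H1 x h2). specialize (H3 x h1 h2 h3). lra.
Qed.

Lemma map_nth_seq' {A} (l : list A) d : map (fun i => nth i l d) (seq 0 (length l)) = l.
Proof.
  induction l; simpl; auto. f_equal. rewrite <- seq_shift, map_map. simpl. auto.
Qed.


Lemma lsum_nil (X : SIP) c : lsum X nil c = s0 X.
Proof. auto. Qed.

Lemma hsum_lsum (X : SIP) k (v : nat -> X) c :
  ssum X k (fun i => sscal X (c i) (v i)) = lsum X (map v (seq 0 k)) c.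
Proof.
  induction k. auto. rewrite seq_S, map_app, lsum_app, <- IHk. simpl.
  rewrite length_map, length_seq, !Nat.add_0_r, sadd_0r. auto.
Qed.

Lemma weq (X : SIP) (Xd : sdef X) (u w : X) : (forall y, sinn X u y = sinn X w y) -> u = w.
Proof.
  intro H. apply def_of_orth; auto. intro x. rewrite sinn_subr, (sinn_conj X u x), (sinn_conj X w x), H. cgo.
Qed.

Fixpoint proj (X : SIP) (e : list X) (v : X) : X :=
  match e with nil => s0 X | u :: t => sadd X (sscal X (sinn X v u) u) (proj X t v) end.

Lemma proj_span (X : SIP) e v : inspan X e (proj X e v).
Proof.
  induction e; simpl. apply inspan_0.
  destruct IHe as [c Hc]. exists (fun i => match i with O => sinn X v a | S j => c j end). simpl. rewrite Hc. auto.
Qed.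

Lemma proj_inn (X : SIP) e v : ONL X e -> forall f, In f e -> sinn X (proj X e v) f = sinn X v f.
Proof.
  induction e as [|u t IH]; simpl; intros Ho f Hf. contradiction.
  destruct Ho as [h1 [h2 h3]].
  rewrite sinn_add, sinn_scal. destruct Hf as [<-|Hf].
  - rewrite self_eq, h1. assert (sinn X (proj X t v) u = RtoC 0).
    { rewrite sinn_conj. rewrite (orth_span X t u h2). cgo. apply proj_span. }
    rewrite H. cgo.
  - rewrite (h2 f Hf), IH; auto. cgo.
Qed.

Section NC.
Variable H : Hilbert.
Let X := SH H.
Lemma Hdef : sdef X.
Proof.
  intros x Hx. apply (hinner_def H). apply (nrm2_zero_iff_inn X). auto.
Qed.

Variable T : H -> H.
Variable Ts : H -> H.
Hypothesis HT : linear X X T.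
Hypothesis Ha : adj X X T Ts.
Variable C : R.
Hypothesis HC : 0 < C.
Hypothesis Hb : bnd X X T C.
Hypothesis Hc : cpt X X (SS X X T Ts).
Variable s : R.
Hypothesis Hs : 0 < s.

Notation SO := (SS X X T Ts).

Lemma NC_main e : ONL X e -> EIGa X X T Ts (s ^ 2) e ->
  (forall x, orthL X e x -> nrm2 X (T x) <= s ^ 2 * nrm2 X x) ->
  ncount H s T = INR (length e).
Proof.
  intros Ho He Hsp.
  assert (Ha2 : 0 < s ^ 2) by (apply pow_lt; auto).
  unfold ncount.
  match goal with |- real (Lub_Rbar ?E) = _ => set (EE := E) end.
  assert (Hlub : is_lub_Rbar EE (INR (length e))).
  { split.
    - intros x [k [-> [v [Hv Hev]]]]. simpl.
      apply le_INR.
      assert (Hsp_v : forall i, (i < k)%nat -> inspan X e (v i)).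
      { intros i Hi. destruct (Hev i Hi) as [lam [Hlam Hei]].
        assert (Sv : SO (v i) = sscal X (RtoC lam) (v i)).
        { apply weq. apply Hdef. intro y. rewrite (S_self X X T Ts Ha).
          rewrite sinn_scal. unfold SS. rewrite <- Ha. apply Hei. }
        set (p := proj X e (v i)). set (w := ssub X (v i) p).
        assert (Hw : orthL X e w).
        { intros f Hf. unfold w. rewrite sinn_subl. unfold p. rewrite proj_inn; auto. cgo. }
        assert (Hpsp : inspan X e p) by apply proj_span.
        assert (HSp : inspan X e (SO p)).
        { generalize p Hpsp. apply (span_ind X (fun x => inspan X e (SO x)) e).
          - rewrite (lin_0 X X SO). apply inspan_0. apply HS; auto. apply Hdef.
          - intros x y Hx Hy. rewrite (proj1 (HS X X Hdef T Ts HT Ha)). apply inspan_add; auto.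
          - intros c x Hx. rewrite (proj2 (HS X X Hdef T Ts HT Ha)). apply inspan_scal; auto.
          - intros u Hu. destruct (He u Hu) as [mu [_ ->]]. apply inspan_scal, inspan_In; auto. }
        set (d := ssub X (sscal X (RtoC lam) p) (SO p)).
        assert (Hd : inspan X e d).
        { unfold d, ssub. apply inspan_add. apply inspan_scal; auto. rewrite sopp_scal. apply inspan_scal; auto. }
        set (uu := ssub X (SO w) (sscal X (RtoC lam) w)).
        assert (Euu : forall y, sinn X uu y = sinn X d y).
        { intro y. unfold uu, d, w. rewrite (lin_sub X X SO) by (apply HS; auto; apply Hdef).
          rewrite Sv. rewrite !sinn_subl, !sinn_scal, !sinn_subl. cgo. }
        assert (Huu : orthL X e uu).
        { intros f Hf. unfold uu. rewrite sinn_subl, sinn_scal, Hw; auto.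
          rewrite (W_inv X X T Ts Ha e w); auto. cgo.
          intros g Hg. destruct (He g Hg) as [mu [_ Hmu]]. eauto. }
        assert (Zuu : nrm2 X uu = 0).
        { unfold nrm2. rewrite Euu. rewrite sinn_conj. rewrite (orth_span X e uu); auto. }
        assert (Sw : SO w = sscal X (RtoC lam) w).
        { apply ssub_eq. apply Hdef. auto. }
        assert (Zw : nrm2 X w = 0).
        { pose proof (Hsp w Hw). rewrite (nrm2_T X X T Ts Ha), Sw, re_scal_real in H0.
          fold (nrm2 X w) in H0. pose proof (nrm2_pos X w). nra. }
        assert (v i = p). { apply (ssub_eq X). apply Hdef. auto. }
        rewrite H0. auto. }
      set (l := map v (seq 0 k)).
      assert (Hl : nindep X l).
      { intros c Hc0 i Hi. unfold l in *. rewrite <- hsum_lsum in Hc0. rewrite length_map, length_seq in Hi.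
        apply (Hv c); auto. apply Hdef; auto. }
      assert (Hlen : length l = k) by (unfold l; rewrite length_map, length_seq; auto).
      rewrite <- Hlen. destruct (Compare_dec.le_lt_dec (length l) (length e)); auto. exfalso.
      destruct (w_exists X l e Hl l0) as [x [h1 [h2 h3]]].
      apply h3. apply (nrm2_zero_iff_inn X). apply (orth_span X e x).
      intros u Hu. apply h2; auto.
      apply (inspan_trans X e l); auto. intros u Hu. unfold l in Hu. apply in_map_iff in Hu.
      destruct Hu as [i [<- Hi]]. apply in_seq in Hi. apply Hsp_v. lia.
    - intros b Hb'. apply Hb'. exists (length e). split; auto.
      exists (fun i => nth i e (h0 H)). split.
      + intros c Hc0 i Hi. pose proof (ONL_nindep X e Ho c) as HN.
        assert (E2 : lsum X e c = h0 H).
        { pose proof (hsum_lsum X (length e) (fun i => nth i e (h0 H)) c) as E3.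
          rewrite map_nth_seq' in E3. rewrite <- E3. exact Hc0. }
        apply HN; auto. rewrite E2. apply (nrm2_0 X).
      + intros i Hi. destruct (He (nth i e (h0 H))) as [mu [Hmu Hmu2]]. apply nth_In; auto.
        exists mu. split; auto. intro y. unfold eigvec_AstarA.
        change (hinner H) with (sinn X). rewrite Ha. fold (SO y). rewrite <- (S_self X X T Ts Ha).
        rewrite Hmu2, sinn_scal. auto. }
  rewrite (is_lub_Rbar_unique _ _ Hlub). auto.
Qed.

End NC.

Lemma nrm_of_bnd (X Y : SIP) (T : X -> Y) C x : 0 < C -> bnd X Y T C -> nrm Y (T x) <= sqrt C * nrm X x.
Proof.
  intros HC Hb. unfold nrm. rewrite <- sqrt_mult_alt by lra. apply sqrt_le_1_alt. apply Hb.
Qed.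

Lemma bnd_mono (X Y : SIP) (T : X -> Y) C C' : C <= C' -> bnd X Y T C -> bnd X Y T C'.
Proof. intros H Hb x. specialize (Hb x). pose proof (nrm2_pos X x). nra. Qed.

Lemma cpt_ext (X Y : SIP) (T U : X -> Y) : (forall x, T x = U x) -> cpt X Y T -> cpt X Y U.
Proof.
  intros E Hc u Hu. destruct (Hc u Hu) as [phi [l [H1 H2]]]. exists phi, l. split; auto.
  intros e He. destruct (H2 e He) as [N HN]. exists N. intros n Hn. rewrite <- E. apply HN; auto.
Qed.

Lemma cpt_comp_l (X Y Z : SIP) (T : X -> Y) (U : Y -> Z) C :
  cpt X Y T -> linear Y Z U -> 0 < C -> bnd Y Z U C -> cpt X Z (fun x => U (T x)).
Proof.
  intros Hc HU HC Hb u Hu. destruct (Hc u Hu) as [phi [l [H1 H2]]]. exists phi, (U l). split; auto.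
  intros e He. destruct (H2 (e / (sqrt C + 1))) as [N HN].
  { apply Rdiv_lt_0_compat; auto. pose proof (sqrt_pos C); lra. }
  exists N. intros n Hn. rewrite <- lin_sub by auto.
  eapply Rle_lt_trans. apply (nrm_of_bnd Y Z U C); auto.
  specialize (HN n Hn). pose proof (sqrt_pos C).
  assert (sqrt C * nrm Y (ssub Y (T (u (phi n))) l) <= sqrt C * (e / (sqrt C + 1))).
  { apply Rmult_le_compat_l; lra. }
  assert (sqrt C * (e / (sqrt C + 1)) < e).
  { unfold Rdiv. apply (Rmult_lt_reg_r (sqrt C + 1)). lra. rewrite Rmult_assoc, Rmult_assoc, Rinv_l by lra. nra. }
  lra.
Qed.

Lemma cpt_comp_r (X Y Z : SIP) (U : X -> Y) (T : Y -> Z) C :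
  cpt Y Z T -> 0 < C -> bnd X Y U C -> cpt X Z (fun x => T (U x)).
Proof.
  intros Hc HC Hb u [M HM]. apply (Hc (fun n => U (u n))).
  exists (sqrt C * M). intro n. eapply Rle_trans. apply (nrm_of_bnd X Y U C); auto.
  apply Rmult_le_compat_l. apply sqrt_pos. auto.
Qed.

Lemma cv_sub (Y : SIP) (f : nat -> Y) l psi : cv Y f l -> (forall n, (psi n < psi (S n))%nat) -> cv Y (fun n => f (psi n)) l.
Proof.
  intros H Hp e He. destruct (H e He) as [N HN]. exists N. intros n Hn. apply HN.
  pose proof (incr_ge psi Hp n). lia.
Qed.


Lemma sopp_add (Y : SIP) (a b : Y) : sopp Y (sadd Y a b) = sadd Y (sopp Y a) (sopp Y b).
Proof. rewrite !sopp_scal, sscal_distr_l. auto. Qed.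

Lemma add_sub4 (Y : SIP) (a b l1 l2 : Y) : ssub Y (sadd Y a b) (sadd Y l1 l2) = sadd Y (ssub Y a l1) (ssub Y b l2).
Proof. unfold ssub. rewrite sopp_add, vswap4. auto. Qed.

Lemma cpt_add (X Y : SIP) (T1 T2 : X -> Y) : cpt X Y T1 -> cpt X Y T2 -> cpt X Y (fun x => sadd Y (T1 x) (T2 x)).
Proof.
  intros H1 H2 u Hu. destruct (H1 u Hu) as [p1 [l1 [Hp1 Hc1]]].
  destruct (H2 (fun n => u (p1 n))) as [p2 [l2 [Hp2 Hc2]]].
  { destruct Hu as [M HM]. exists M; auto. }
  exists (fun n => p1 (p2 n)), (sadd Y l1 l2). split.
  { intro n. assert (p1 (p2 n) < p1 (p2 (S n)))%nat; auto.
    assert (forall a b, (a < b)%nat -> (p1 a < p1 b)%nat).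
    { intros a b Hab. induction b. lia. destruct (Nat.eq_dec a b). subst; auto.
      specialize (Hp1 b). assert (p1 a < p1 b)%nat by (apply IHb; lia). lia. }
    apply H. auto. }
  pose proof (cv_sub Y _ _ p2 Hc1 Hp2) as Hc1'.
  intros e He. destruct (Hc1' (e/2)) as [N1 HN1]. lra. destruct (Hc2 (e/2)) as [N2 HN2]. lra.
  exists (N1 + N2)%nat. intros n Hn. simpl. rewrite add_sub4.
  eapply Rle_lt_trans. apply nrm_triangle. specialize (HN1 n ltac:(lia)). specialize (HN2 n ltac:(lia)). simpl in *. lra.
Qed.

Lemma cpt_zero (X Y : SIP) : cpt X Y (fun _ => s0 Y).
Proof.
  intros u _. exists (fun n => n), (s0 Y). split. intro; lia. intros e He. exists O. intros n _.
  rewrite ssub_self. unfold nrm. rewrite nrm2_0, sqrt_0. auto.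
Qed.

Lemma cpt_ssum (X Y : SIP) (L : nat) (Tk : nat -> X -> Y) :
  (forall k, (k < L)%nat -> cpt X Y (Tk k)) -> cpt X Y (fun x => ssum Y L (fun k => Tk k x)).
Proof.
  induction L; intros H; simpl. apply cpt_zero.
  apply (cpt_add X Y (fun x => ssum Y L (fun k => Tk k x)) (Tk L)). apply IHL; auto. apply H; auto.
Qed.

Lemma adj_bnd (X Y : SIP) (T : X -> Y) Ts C : 0 < C -> adj X Y T Ts -> bnd X Y T C -> bnd Y X Ts C.
Proof.
  intros HC Ha Hb y. set (w := Ts y).
  assert (E : nrm2 X w = Re (sinn Y y (T w))).
  { unfold nrm2 at 1. unfold w at 1. rewrite adj_sym with (T := T) by auto. reflexivity. }
  pose proof (amgm Y y (T w) C HC). pose proof (Hb w).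
  assert (nrm2 Y (T w) / C <= nrm2 X w).
  { apply (Rmult_le_reg_r C); auto. unfold Rdiv. rewrite Rmult_assoc, Rinv_l by lra. lra. }
  lra.
Qed.

Lemma cpt_bnd (X Y : SIP) (Xd : sdef X) (T : X -> Y) : linear X Y T -> cpt X Y T -> exists C, 0 < C /\ bnd X Y T C.
Proof.
  intros HT Hc. apply NNPP. intro Hno.
  assert (Hn : forall n : nat, exists x, nrm2 X x = 1 /\ INR (S n) * INR (S n) < nrm2 Y (T x)).
  { intro n. apply NNPP. intro Hx. apply Hno. exists (INR (S n) * INR (S n)). split.
    pose proof (lt_0_INR (S n) ltac:(lia)). nra.
    intro x. destruct (Rle_lt_or_eq_dec 0 (nrm2 X x) (nrm2_pos X x)) as [Hp|Hz].
    - set (u := sscal X (RtoC (/ nrm X x)) x).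
      assert (0 < nrm X x) by (unfold nrm; apply sqrt_lt_R0; auto).
      assert (Hu1 : nrm2 X u = 1).
      { unfold u. rewrite nrm2_scal. simpl. rewrite <- (nrm_sq X x). field. lra. }
      assert (Hu2 : nrm2 Y (T u) = nrm2 Y (T x) / nrm2 X x).
      { unfold u. rewrite (proj2 HT), nrm2_scal. simpl. rewrite <- (nrm_sq X x). field. lra. }
      destruct (Rle_dec (nrm2 Y (T x)) (INR (S n) * INR (S n) * nrm2 X x)) as [|Hgt]; auto.
      exfalso. apply Hx. exists u. split; auto. rewrite Hu2.
      apply (Rmult_lt_reg_r (nrm2 X x)); auto.
      replace (nrm2 Y (T x) / nrm2 X x * nrm2 X x) with (nrm2 Y (T x)) by (field; lra). lra.
    - rewrite (Xd x (eq_sym Hz)), lin_0 by auto. rewrite !nrm2_0. lra. }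
  set (xs := fun n => proj1_sig (constructive_indefinite_description _ (Hn n))).
  assert (Hxs : forall n, nrm2 X (xs n) = 1 /\ INR (S n) * INR (S n) < nrm2 Y (T (xs n))).
  { intro n. unfold xs. destruct (constructive_indefinite_description _ (Hn n)); auto. }
  destruct (Hc xs) as [phi [l [Hphi Hcv]]].
  { exists 1. intro n. unfold nrm. rewrite (proj1 (Hxs n)), sqrt_1. lra. }
  destruct (Hcv 1) as [N HN]. lra.
  destruct (INR_unbounded (nrm Y l)) as [n0 Hn0].
  set (n := (N + n0)%nat). specialize (HN n ltac:(unfold n; lia)).
  pose proof (nrm_diff Y (T (xs (phi n))) l). pose proof (Rle_abs (nrm Y (T (xs (phi n))) - nrm Y l)).
  destruct (Hxs (phi n)) as [_ Hb].
  assert (INR (S (phi n)) < nrm Y (T (xs (phi n)))).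
  { unfold nrm. rewrite <- (sqrt_square (INR (S (phi n)))) by apply pos_INR. apply sqrt_lt_1_alt. split; auto.
    pose proof (pos_INR (S (phi n))). nra. }
  assert (INR n0 + 1 <= INR (S (phi n))).
  { rewrite <- S_INR. apply le_INR. pose proof (incr_ge phi Hphi n). unfold n in *. lia. }
  lra.
Qed.

Definition Good (X Y : SIP) (T : X -> Y) (Ts : Y -> X) :=
  linear X Y T /\ adj X Y T Ts /\ (exists C, 0 < C /\ bnd X Y T C) /\ cpt X X (SS X Y T Ts).

Lemma Good_spec (X Y : SIP) (Xd : sdef X) T Ts a : Good X Y T Ts -> 0 < a ->
  exists e, ONL X e /\ EIGa X Y T Ts a e /\ forall x, orthL X e x -> nrm2 Y (T x) <= a * nrm2 X x.
Proof.
  intros [HT [Ha [[C [HC Hb]] Hc]]] Hapos. exact (SPEC X Y Xd T Ts HT Ha C HC Hb Hc a Hapos).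
Qed.

Section HG.
Variable H : Hilbert.
Notation X := (SH H).

Lemma Good_count T Ts s : Good X X T Ts -> 0 < s ->
  exists e, ncount H s T = INR (length e) /\ ONL X e /\ EIGa X X T Ts (s ^ 2) e /\
     forall x, orthL X e x -> nrm2 X (T x) <= s ^ 2 * nrm2 X x.
Proof.
  intros HG Hs. assert (0 < s ^ 2) by (apply pow_lt; auto).
  destruct (Good_spec X X (Hdef H) T Ts (s ^ 2) HG H0) as [e [h1 [h2 h3]]].
  exists e. split; auto. destruct HG as [HT [Ha [[C [HC Hb]] Hc]]].
  eapply NC_main; eauto.
Qed.

Lemma count_mono T Ts s s' : Good X X T Ts -> 0 < s -> s <= s' -> ncount H s' T <= ncount H s T.
Proof.
  intros HG Hs Hss. destruct (Good_count T Ts s HG Hs) as [e [E1 [O1 [G1 P1]]]].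
  destruct (Good_count T Ts s' HG ltac:(lra)) as [e' [E2 [O2 [G2 P2]]]].
  rewrite E1, E2. apply le_INR.
  destruct HG as [HT [Ha [[C [HC Hb]] Hc]]].
  apply (CMP X e e' (fun x => nrm2 X (T x)) (s ^ 2)); auto.
  apply ONL_nindep; auto.
  intros x Hx _ Hn. pose proof (SPEC_span X X (Hdef H) T Ts HT Ha (s' ^ 2) ltac:(apply pow_lt; lra) e' O2 G2 x Hx Hn).
  assert (s ^ 2 <= s' ^ 2) by (apply pow_incr; lra). pose proof (nrm2_pos X x). nra.
Qed.


Lemma count_large T Ts s C : Good X X T Ts -> 0 < s -> bnd X X T C -> C <= s ^ 2 -> ncount H s T = 0.
Proof.
  intros HG Hs Hb HC. destruct (Good_count T Ts s HG Hs) as [e [E1 [O1 [G1 P1]]]].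
  rewrite E1. destruct e as [|u t]. auto. exfalso.
  destruct (G1 u (or_introl eq_refl)) as [mu [Hmu Su]].
  destruct HG as [HT [Ha _]].
  pose proof (nrm2_Tu X X T Ts Ha u mu Su). simpl in O1. destruct O1 as [hu _].
  specialize (Hb u). rewrite H0, hu in Hb. lra.
Qed.

Lemma adj_swap (T Ts : X -> X) : adj X X T Ts -> adj X X Ts T.
Proof. intros Ha x y. rewrite adj_sym with (T := T) by auto. auto. Qed.

Lemma count_sym T Ts s : Good X X T Ts -> Good X X Ts T -> 0 < s -> ncount H s T <= ncount H s Ts.
Proof.
  intros HG HG' Hs. destruct (Good_count T Ts s HG Hs) as [e [E1 [O1 [G1 P1]]]].
  destruct (Good_count Ts T s HG' Hs) as [e' [E2 [O2 [G2 P2]]]].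
  rewrite E1, E2. apply le_INR. rewrite <- (length_map T e).
  destruct HG as [HT [Ha [[C [HC Hb]] Hc]]].
  assert (0 < s ^ 2) by (apply pow_lt; auto).
  apply (CMP X e' (map T e) (fun y => nrm2 X (Ts y)) (s ^ 2)); auto.
  apply (img_nindep X X T Ts HT Ha (s ^ 2) H0 e); auto.
  intros y Hy _ Hn. apply (img_span X X (Hdef H) T Ts HT Ha (s ^ 2) H0 e); auto.
Qed.

End HG.

Lemma csum_ext n f g : (forall i, (i < n)%nat -> f i = g i) -> csum n f = csum n g.
Proof. induction n; simpl; intros Hfg. auto. rewrite (Hfg n) by lia. rewrite IHn. auto. intros; apply Hfg; lia. Qed.

Lemma csum_add n f g : csum n (fun i => Cplus (f i) (g i)) = Cplus (csum n f) (csum n g).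
Proof. induction n; simpl. cgo. rewrite IHn. generalize (csum n f) (csum n g) (f n) (g n). intros; cgo. Qed.

Lemma csum_scal n c f : csum n (fun i => Cmult c (f i)) = Cmult c (csum n f).
Proof. induction n; simpl. cgo. rewrite IHn. generalize (csum n f) (f n). intros; cgo. Qed.

Lemma csum_conj n f : csum n (fun i => Cconj (f i)) = Cconj (csum n f).
Proof. induction n; simpl. cgo. rewrite IHn. generalize (csum n f) (f n). intros; cgo. Qed.

Lemma re_csum n f : Re (csum n f) = rsum n (fun i => Re (f i)).
Proof. induction n; simpl; auto. rewrite <- IHn. auto. Qed.

Lemma csum_zero n : csum n (fun _ => RtoC 0) = RtoC 0.
Proof. induction n; simpl; auto. rewrite IHn. cgo. Qed.

Lemma csum_single n k g : (k < n)%nat -> csum n (fun j => if Nat.eqb j k then g j else RtoC 0) = g k.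
Proof.
  induction n; intros Hk. lia. simpl. destruct (Nat.eq_dec k n).
  - subst. rewrite Nat.eqb_refl.
    rewrite (csum_ext n _ (fun _ => RtoC 0)). rewrite csum_zero. generalize (g n); intros; cgo.
    intros i Hi. replace (Nat.eqb i n) with false; auto. symmetry; apply Nat.eqb_neq; lia.
  - replace (Nat.eqb n k) with false by (symmetry; apply Nat.eqb_neq; lia). rewrite IHn by lia. generalize (g k); intros; cgo.
Qed.

Lemma rsum_nonneg n f : (forall i, (i < n)%nat -> 0 <= f i) -> 0 <= rsum n f.
Proof. induction n; simpl; intros. lra. pose proof (H n ltac:(lia)). pose proof (IHn ltac:(intros; apply H; lia)). lra. Qed.

Lemma rsum_ext n f g : (forall i, (i < n)%nat -> f i = g i) -> rsum n f = rsum n g.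
Proof. induction n; simpl; intros Hfg. auto. rewrite (Hfg n) by lia. rewrite IHn. auto. intros; apply Hfg; lia. Qed.

Lemma rsum_le n f g : (forall i, (i < n)%nat -> f i <= g i) -> rsum n f <= rsum n g.
Proof. induction n; simpl; intros Hfg. lra. pose proof (Hfg n ltac:(lia)). pose proof (IHn ltac:(intros; apply Hfg; lia)). lra. Qed.

Lemma rsum_const n c : rsum n (fun _ => c) = INR n * c.
Proof. induction n; simpl; auto. lra. rewrite IHn. destruct n; simpl; lra. Qed.

Lemma unif_bnd (X Y : SIP) (L : nat) (Tk : nat -> X -> Y) :
  (forall k, (k < L)%nat -> exists C, 0 < C /\ bnd X Y (Tk k) C) -> exists C, 0 < C /\ forall k, (k < L)%nat -> bnd X Y (Tk k) C.
Proof.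
  induction L; intros H. exists 1. split. lra. intros; lia.
  destruct IHL as [C1 [H1 H2]]. intros; apply H; lia. destruct (H L ltac:(lia)) as [C2 [H3 H4]].
  exists (C1 + C2). split. lra. intros k Hk. destruct (Nat.eq_dec k L).
  subst. apply (bnd_mono X Y _ C2); auto. lra. apply (bnd_mono X Y _ C1); auto. lra. apply H2. lia.
Qed.

Section HLs.
Variable H : Hilbert.
Variable L : nat.

Definition HL : SIP.
Proof.
  refine (Build_SIP (nat -> H) (fun _ => h0 H) (fun f g k => hadd H (f k) (g k)) (fun f k => hopp H (f k))
    (fun c f k => hscal H c (f k)) (fun f g => csum L (fun k => hinner H (f k) (g k))) _ _ _ _ _ _ _ _ _ _ _ _).
  - intros; apply functional_extensionality; intros; apply hadd_assoc.
  - intros; apply functional_extensionality; intros; apply hadd_comm.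
  - intros; apply functional_extensionality; intros; apply hadd_0.
  - intros; apply functional_extensionality; intros; apply hadd_opp.
  - intros; apply functional_extensionality; intros; apply hscal_1.
  - intros; apply functional_extensionality; intros; apply hscal_assoc.
  - intros; apply functional_extensionality; intros; apply hscal_distr_l.
  - intros; apply functional_extensionality; intros; apply hscal_distr_r.
  - intros. rewrite <- csum_add. apply csum_ext. intros; apply hinner_add.
  - intros. rewrite <- csum_scal. apply csum_ext. intros; apply hinner_scal.
  - intros. rewrite <- csum_conj. apply csum_ext. intros; apply hinner_conj.
  - intros. rewrite re_csum. apply rsum_nonneg. intros; apply hinner_pos.
Defined.

Notation X := (SH H).

Lemma HL_inner (f g : HL) : sinn HL f g = csum L (fun k => sinn X (f k) (g k)).
Proof. auto. Qed.

Lemma HL_nrm2 (f : HL) : nrm2 HL f = rsum L (fun k => nrm2 X (f k)).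
Proof. unfold nrm2. simpl. rewrite re_csum. auto. Qed.

Definition iota (k : nat) (u : H) : HL := fun j => if Nat.eqb j k then u else h0 H.

Lemma iota_inn (y : HL) k u : (k < L)%nat -> sinn HL y (iota k u) = sinn X (y k) u.
Proof.
  intro Hk. rewrite HL_inner. unfold iota.
  rewrite (csum_ext L _ (fun j => if Nat.eqb j k then sinn X (y j) u else RtoC 0)).
  apply csum_single; auto.
  intros j Hj. destruct (Nat.eqb j k); auto. apply (sinn_0r X).
Qed.

Lemma iota_iota k k' u w : (k < L)%nat -> (k' < L)%nat ->
  sinn HL (iota k u) (iota k' w) = if Nat.eqb k' k then sinn X u w else RtoC 0.
Proof.
  intros Hk Hk'. rewrite iota_inn by auto. unfold iota. destruct (Nat.eqb k' k); auto. apply (sinn_0l X).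
Qed.

Variable Ak Aks : nat -> H -> H.
Definition BB (x : H) : HL := fun k => if Nat.ltb k L then Ak k x else h0 H.
Definition BBs (y : HL) : H := hsum H L (fun k => Aks k (y k)).

Lemma BB_linear : (forall k, (k < L)%nat -> linear X X (Ak k)) -> linear X HL BB.
Proof.
  intros Hl. split; intros; apply functional_extensionality; intro k; unfold BB; simpl;
  destruct (Nat.ltb_spec k L).
  - apply (Hl k H0).
  - symmetry; apply hadd_0.
  - apply (Hl k H0).
  - symmetry; apply (sscal_z X).
Qed.

Lemma BB_adj : (forall k, (k < L)%nat -> adj X X (Ak k) (Aks k)) -> adj X HL BB BBs.
Proof.
  intros Ha x y. rewrite HL_inner. unfold BBs. change (hsum H) with (ssum X). rewrite sinn_sum_r.
  apply csum_ext. intros k Hk. unfold BB. rewrite (proj2 (Nat.ltb_lt _ _) Hk). apply Ha; auto.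
Qed.

Lemma BB_nrm2 x : nrm2 HL (BB x) = rsum L (fun k => nrm2 X (Ak k x)).
Proof.
  rewrite HL_nrm2. apply rsum_ext. intros k Hk. unfold BB. rewrite (proj2 (Nat.ltb_lt _ _) Hk). auto.
Qed.

Lemma BB_bnd C : 0 < C -> (forall k, (k < L)%nat -> bnd X X (Ak k) C) -> bnd X HL BB ((INR L + 1) * C).
Proof.
  intros HC Hb x. rewrite BB_nrm2. eapply Rle_trans. apply (rsum_le L _ (fun _ => C * nrm2 X x)).
  intros; apply Hb; auto. rewrite rsum_const. pose proof (nrm2_pos X x). nra.
Qed.

Lemma BB_cpt : (forall k, (k < L)%nat -> cpt X X (fun x => Aks k (Ak k x))) -> cpt X X (SS X HL BB BBs).
Proof.
  intros Hc. apply (cpt_ext X X (fun x => ssum X L (fun k => Aks k (BB x k)))).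
  intro x. unfold SS, BBs. reflexivity.
  apply cpt_ssum. intros k Hk. apply (cpt_ext X X (fun x => Aks k (Ak k x))); auto.
  intro x. unfold BB. rewrite (proj2 (Nat.ltb_lt _ _) Hk). auto.
Qed.

End HLs.

Lemma rsum_plus n f g : rsum n (fun i => f i + g i) = rsum n f + rsum n g.
Proof. induction n; simpl. lra. rewrite IHn. lra. Qed.

Lemma rsum_split_diag n f k : (k < n)%nat -> rsum n f = f k + rsum n (fun j => if Nat.eqb k j then 0 else f j).
Proof.
  induction n; intros Hk. lia. simpl. destruct (Nat.eq_dec k n).
  - subst. rewrite Nat.eqb_refl. rewrite (rsum_ext n (fun j => if Nat.eqb n j then 0 else f j) f). lra.
    intros i Hi. replace (Nat.eqb n i) with false; auto. symmetry; apply Nat.eqb_neq; lia.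
  - replace (Nat.eqb k n) with false by (symmetry; apply Nat.eqb_neq; lia). rewrite (IHn ltac:(lia)). lra.
Qed.

Lemma rsum_abs_le n f D : (forall i, (i < n)%nat -> Rabs (f i) <= D) -> Rabs (rsum n f) <= INR n * D.
Proof.
  induction n; intros Hf. simpl. rewrite Rabs_R0. lra.
  rewrite S_INR. simpl rsum. eapply Rle_trans. apply Rabs_triang. pose proof (IHn ltac:(intros; apply Hf; lia)). pose proof (Hf n ltac:(lia)). lra.
Qed.

Lemma DS L f D : 0 <= D -> (forall k j, (k < L)%nat -> (j < L)%nat -> k <> j -> Rabs (f k j) <= D) ->
  Rabs (rsum L (fun k => rsum L (fun j => f k j)) - rsum L (fun k => f k k)) <= INR L * INR L * D.
Proof.
  intros HD Hf.
  rewrite (rsum_ext L _ (fun k => f k k + rsum L (fun j => if Nat.eqb k j then 0 else f k j))).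
  2:{ intros k Hk. apply rsum_split_diag; auto. }
  rewrite rsum_plus. replace (rsum L (fun k => f k k) + rsum L (fun k => rsum L (fun j => if Nat.eqb k j then 0 else f k j)) - rsum L (fun k => f k k))
    with (rsum L (fun k => rsum L (fun j => if Nat.eqb k j then 0 else f k j))) by ring.
  rewrite Rmult_assoc. apply rsum_abs_le. intros k Hk. apply rsum_abs_le. intros j Hj.
  destruct (Nat.eqb_spec k j). rewrite Rabs_R0; auto. apply Hf; auto.
Qed.

Lemma nrm2_ssum (X : SIP) n (u : nat -> X) : nrm2 X (ssum X n u) = rsum n (fun k => rsum n (fun j => Re (sinn X (u k) (u j)))).
Proof.
  unfold nrm2. rewrite sinn_sum_l, re_csum. apply rsum_ext. intros k Hk. rewrite sinn_sum_r, re_csum. auto.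
Qed.

Lemma AMB (X : SIP) (w z y : X) d : 0 < d -> nrm2 X w <= d * d * nrm2 X z -> Rabs (Re (sinn X w y)) <= d * (nrm2 X z + nrm2 X y).
Proof.
  intros Hd Hw. pose proof (amgm X w y (/ d) ltac:(apply Rinv_0_lt_compat; auto)) as H1.
  pose proof (amgm X w (sopp X y) (/ d) ltac:(apply Rinv_0_lt_compat; auto)) as H2.
  rewrite sinn_oppr, re_opp, nrm2_opp in H2.
  assert (E : nrm2 X y / / d = d * nrm2 X y) by (field; lra).
  rewrite E in H1, H2.
  assert (/ d * nrm2 X w <= d * nrm2 X z).
  { apply (Rmult_le_reg_l d); auto. rewrite <- Rmult_assoc, Rinv_r by lra. nra. }
  pose proof (nrm2_pos X y). pose proof (nrm2_pos X z).
  apply Rabs_le. split; nra.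
Qed.

Lemma len_flat {T} (g : nat -> list T) n : INR (length (flat_map g (seq 0 n))) = rsum n (fun k => INR (length (g k))).
Proof.
  induction n. auto. rewrite seq_S, flat_map_app, length_app, plus_INR, IHn. simpl. rewrite app_nil_r. auto.
Qed.

Lemma orth_app (X : SIP) l1 l2 x : orthL X (l1 ++ l2) x -> orthL X l1 x /\ orthL X l2 x.
Proof. intros H. split; intros f Hf; apply H; apply in_or_app; auto. Qed.

Lemma orth_flat (X : SIP) (g : nat -> list X) n x : orthL X (flat_map g (seq 0 n)) x -> forall k, (k < n)%nat -> orthL X (g k) x.
Proof.
  intros H k Hk f Hf. apply H. apply in_flat_map. exists k. split; auto. apply in_seq. lia.
Qed.

Lemma ONL_app (X : SIP) l1 l2 : ONL X l1 -> ONL X l2 -> (forall u w, In u l1 -> In w l2 -> sinn X u w = RtoC 0) -> ONL X (l1 ++ l2).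
Proof.
  induction l1; simpl; intros H1 H2 H3; auto. destruct H1 as [h1 [h2 h3]]. split; auto. split.
  intros v Hv. apply in_app_or in Hv. destruct Hv; auto.
  apply IHl1; auto.
Qed.

Lemma rsum_ge_term n f k : (k < n)%nat -> (forall i, (i < n)%nat -> 0 <= f i) -> f k <= rsum n f.
Proof.
  intros Hk Hf. rewrite (rsum_split_diag n f k Hk). pose proof (rsum_nonneg n (fun j => if Nat.eqb k j then 0 else f j)).
  assert (0 <= rsum n (fun j => if Nat.eqb k j then 0 else f j)). apply H. intros i Hi. destruct (Nat.eqb k i). lra. apply Hf; auto. lra.
Qed.

Lemma rsum_zero_all n f : (forall i, (i < n)%nat -> 0 <= f i) -> rsum n f <= 0 -> forall i, (i < n)%nat -> f i = 0.
Proof.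
  intros Hf Hs i Hi. pose proof (rsum_ge_term n f i Hi Hf). pose proof (Hf i Hi). lra.
Qed.

Lemma rsum_scal n c f : rsum n (fun i => c * f i) = c * rsum n f.
Proof. induction n; simpl. ring. rewrite IHn. ring. Qed.

Lemma rsum_minus n f g : rsum n (fun i => f i - g i) = rsum n f - rsum n g.
Proof. induction n; simpl. ring. rewrite IHn. ring. Qed.

Lemma exp_le' x y : x <= y -> exp x <= exp y.
Proof. intros [H|H]. left; apply exp_increasing; auto. subst; lra. Qed.

Lemma Rpower_pos x y : 0 < Rpower x y.
Proof. unfold Rpower. apply exp_pos. Qed.

Lemma Rpower_neg_decr t t0 b : 0 < t -> t < t0 -> 0 < b -> Rpower t0 (- b) < Rpower t (- b).
Proof.
  intros Ht Htt Hb. unfold Rpower. apply exp_increasing. pose proof (ln_increasing t t0 Ht Htt). nra.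
Qed.

Section SB.
Variable H : Hilbert.
Notation X := (SH H).

Lemma ncount_nonneg T Ts s : Good X X T Ts -> 0 < s -> 0 <= ncount H s T.
Proof. intros HG Hs. destruct (Good_count H T Ts s HG Hs) as [e [E _]]. rewrite E. apply pos_INR. Qed.

Lemma sval_ge T Ts C t m : Good X X T Ts -> 0 < C -> bnd X X T C -> 0 < t -> (1 <= m)%nat ->
  INR m <= ncount H t T -> t <= sval H m T.
Proof.
  intros HG HC Hb Ht Hm Hc. unfold sval.
  set (E := fun s => 0 < s /\ ncount H s T < INR m).
  set (s0 := sqrt C + 1).
  assert (Hs0 : E s0).
  { split. unfold s0; pose proof (sqrt_pos C); lra.
    rewrite (count_large H T Ts s0 C HG) by (unfold s0; try (pose proof (sqrt_pos C); lra); auto;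
      pose proof (sqrt_pos C); pose proof (sqrt_sqrt C ltac:(lra)); simpl; nra).
    apply lt_0_INR. lia. }
  assert (Hlb : forall s, E s -> t <= s).
  { intros s [Hs Hcs]. destruct (Rle_dec t s) as [|Hts]; auto. exfalso.
    pose proof (count_mono H T Ts s t HG Hs ltac:(lra)). lra. }
  destruct (Glb_Rbar_correct E) as [lbE glbE].
  assert (A1 : Rbar_le (Glb_Rbar E) s0) by (apply lbE; auto).
  assert (A2 : Rbar_le t (Glb_Rbar E)) by (apply glbE; intros x Hx; apply Hlb; auto).
  destruct (Glb_Rbar E) as [l| |]; simpl in *; try contradiction; auto.
Qed.

Lemma SB T Ts b : Good X X T Ts -> 0 < b -> Sigma0 H b T ->
  forall e, 0 < e -> exists t0, 0 < t0 /\ forall t, 0 < t < t0 -> ln (ncount H t T + 1) <= e * Rpower t (- / b).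
Proof.
  intros HG Hb [_ HS] e He.
  destruct HG as [HT [Ha [[C [HC Hbd]] Hc]]] eqn:EG.
  destruct (HS (Rpower e b) (Rpower_pos e b)) as [N HN].
  set (N' := max N 1).
  assert (HlnN : 0 < ln (INR N' + 1)).
  { rewrite <- ln_1. apply ln_increasing. lra. pose proof (pos_INR N'). assert (1 <= INR N') by (apply (le_INR 1); unfold N'; lia). lra. }
  set (q := e / ln (INR N' + 1)).
  assert (Hq : 0 < q) by (apply Rdiv_lt_0_compat; auto).
  exists (Rpower q b). split. apply Rpower_pos.
  intros t [Ht Htt].
  destruct (Good_count H T Ts t HG Ht) as [el [Em _]]. set (m := length el) in *.
  rewrite Em.
  destruct (Compare_dec.lt_dec m N') as [Hlt|Hge].
  -
    assert (E1 : Rpower (Rpower q b) (- / b) = / q).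
    { rewrite Rpower_mult. replace (b * - / b) with (Ropp 1) by (field; lra). rewrite Rpower_Ropp, Rpower_1; auto. }
    pose proof (Rpower_neg_decr t (Rpower q b) (/ b) Ht Htt ltac:(apply Rinv_0_lt_compat; auto)) as D.
    rewrite E1 in D.
    assert (ln (INR m + 1) <= ln (INR N' + 1)).
    { apply ln_le. pose proof (pos_INR m); lra. apply Rplus_le_compat_r. apply le_INR. lia. }
    assert (e * / q = ln (INR N' + 1)) by (unfold q; field; lra).
    assert (e * / q < e * Rpower t (- / b)) by (apply Rmult_lt_compat_l; auto).
    lra.
  - assert (Hm1 : (1 <= m)%nat) by (unfold N' in *; lia).
    assert (HmN : (N <= m)%nat) by (unfold N' in *; lia).
    pose proof (sval_ge T Ts C t m HG HC Hbd Ht Hm1 ltac:(rewrite Em; lra)) as S1.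
    pose proof (HN m HmN) as S2. pose proof (Rle_abs (sval H m T)) as S3.
    assert (Hlm : 0 < ln (INR m + 1)).
    { rewrite <- ln_1. apply ln_increasing. lra. pose proof (le_INR 1 m Hm1). simpl in *. lra. }
    assert (Ht2 : t <= Rpower e b * Rpower (ln (INR m + 1)) (- b)) by lra.
    apply ln_le in Ht2; auto.
    rewrite ln_mult in Ht2 by apply Rpower_pos. rewrite !ln_Rpower in Ht2.
    assert (L1 : ln (ln (INR m + 1)) <= ln e - / b * ln t).
    { apply (Rmult_le_reg_l b); auto. rewrite Rmult_minus_distr_l, <- Rmult_assoc, Rinv_r, Rmult_1_l by lra. lra. }
    apply exp_le' in L1. rewrite exp_ln in L1 by auto.
    unfold Rpower. replace (ln e - / b * ln t) with (ln e + - / b * ln t) in L1 by ring.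
    rewrite exp_plus, exp_ln in L1 by auto. exact L1.
Qed.

End SB.

Lemma RL1 l y : 0 <= y -> (forall e, 0 < e -> l <= (1 + e) * (y + e)) -> l <= y.
Proof.
  intros Hy H. destruct (Rle_dec l y) as [|Hn]; auto. exfalso.
  set (e := Rmin 1 ((l - y) / (2 * (y + 2)))).
  assert (He : 0 < e). { unfold e. apply Rmin_pos. lra. apply Rdiv_lt_0_compat; lra. }
  assert (He1 : e <= 1) by apply Rmin_l.
  assert (He2 : e <= (l - y) / (2 * (y + 2))) by apply Rmin_r.
  specialize (H e He).
  assert (e * (y + 2) <= (l - y) / 2).
  { apply (Rmult_le_compat_r (y + 2)) in He2; try lra. replace ((l - y) / (2 * (y + 2)) * (y + 2)) with ((l - y) / 2) in He2 by (field; lra). lra. }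
  nra.
Qed.

Lemma RL2 l y : 0 < y -> (forall e, 0 < e -> y / (1 + e) - e <= l) -> y <= l.
Proof.
  intros Hy H. destruct (Rle_dec y l) as [|Hn]; auto. exfalso.
  set (e := Rmin 1 ((y - l) / (2 * (y + 2)))).
  assert (He : 0 < e). { unfold e. apply Rmin_pos. lra. apply Rdiv_lt_0_compat; lra. }
  assert (He2 : e <= (y - l) / (2 * (y + 2))) by apply Rmin_r.
  specialize (H e He).
  assert (e * (y + 2) <= (y - l) / 2).
  { apply (Rmult_le_compat_r (y + 2)) in He2; try lra. replace ((y - l) / (2 * (y + 2)) * (y + 2)) with ((y - l) / 2) in He2 by (field; lra). lra. }
  assert (y / (1 + e) >= y - y * e).
  { apply Rle_ge. apply (Rmult_le_reg_r (1 + e)). lra. replace (y / (1 + e) * (1 + e)) with y by (field; lra). nra. }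
  nra.
Qed.

Definition HYP (f g : R -> R) := forall e, 0 < e -> exists lam, 0 < lam /\ exists d, 0 < d /\
  forall s, 0 < s < d -> f s <= (1 + e) * (g (lam * s) + e).

Lemma lub_le (E : R -> Prop) (z : R) : (forall x, E x -> x <= z) -> Rbar_le (Lub_Rbar E) z.
Proof. intros H. destruct (Lub_Rbar_correct E) as [_ H2]. apply H2. intros x Hx. apply H; auto. Qed.

Lemma le_glb (E : R -> Prop) (z : R) : (forall x, E x -> z <= x) -> Rbar_le z (Glb_Rbar E).
Proof. intros H. destruct (Glb_Rbar_correct E) as [_ H2]. apply H2. intros x Hx. apply H; auto. Qed.

Lemma in_lub (E : R -> Prop) x : E x -> Rbar_le x (Lub_Rbar E).
Proof. intros H. destruct (Lub_Rbar_correct E) as [H1 _]. apply H1; auto. Qed.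

Lemma in_glb (E : R -> Prop) x : E x -> Rbar_le (Glb_Rbar E) x.
Proof. intros H. destruct (Glb_Rbar_correct E) as [H1 _]. apply H1; auto. Qed.

Lemma Rbar_le_trans' (a b c : Rbar) : Rbar_le a b -> Rbar_le b c -> Rbar_le a c.
Proof. destruct a, b, c; simpl; intros; try lra; auto; contradiction. Qed.

Lemma LIMSUP f g : (forall s, 0 < s -> 0 <= g s) -> HYP f g -> Rbar_le (limsup0 f) (limsup0 g).
Proof.
  intros Hg Hyp. unfold limsup0.
  destruct (Glb_Rbar_correct (fun y => exists d, 0 < d /\ Rbar_le (Lub_Rbar (fun x => exists s, 0 < s < d /\ x = g s)) y)) as [_ G2].
  apply G2. intros y [dl [Hdl Hy]].
  assert (Hgy : forall s, 0 < s < dl -> g s <= y).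
  { intros s Hs. pose proof (in_lub (fun x => exists s, 0 < s < dl /\ x = g s) (g s) ltac:(exists s; auto)).
    pose proof (Rbar_le_trans' _ _ _ H Hy). simpl in H0. auto. }
  assert (Hy0 : 0 <= y). { pose proof (Hgy (dl / 2) ltac:(lra)). pose proof (Hg (dl/2) ltac:(lra)). lra. }
  assert (Hb : forall e, 0 < e -> Rbar_le (Glb_Rbar (fun y => exists d, 0 < d /\ Rbar_le (Lub_Rbar (fun x => exists s, 0 < s < d /\ x = f s)) y)) ((1 + e) * (y + e))).
  { intros e He. apply in_glb. destruct (Hyp e He) as [lam [Hlam [d [Hd Hf]]]].
    exists (Rmin d (dl / lam)). split. apply Rmin_pos; auto. apply Rdiv_lt_0_compat; auto.
    apply lub_le. intros x [s [Hs ->]].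
    assert (s < d) by (pose proof (Rmin_l d (dl / lam)); lra).
    assert (s < dl / lam) by (pose proof (Rmin_r d (dl / lam)); lra).
    pose proof (Hf s ltac:(lra)).
    assert (lam * s < dl). { apply (Rmult_lt_compat_l lam) in H0; auto. replace (lam * (dl / lam)) with dl in H0 by (field; lra). auto. }
    pose proof (Hgy (lam * s) ltac:(split; [nra|auto])). nra. }
  revert Hb. match goal with |- _ -> Rbar_le ?a _ => generalize a end. intros r Hb.
  destruct r as [l| |].
  - simpl. apply RL1. exact Hy0. intros e He. specialize (Hb e He). simpl in Hb. exact Hb.
  - specialize (Hb 1 Rlt_0_1). simpl in Hb. contradiction.
  - simpl. auto.
Qed.

Lemma LIMINF f g : (forall s, 0 < s -> 0 <= g s) -> HYP f g -> Rbar_le (liminf0 f) (liminf0 g).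
Proof.
  intros Hg Hyp. unfold liminf0.
  set (Sg := fun y : R => exists d, 0 < d /\ Rbar_le y (Glb_Rbar (fun x => exists s, 0 < s < d /\ x = g s))).
  assert (H0g : Rbar_le 0 (Lub_Rbar Sg)).
  { apply in_lub. exists 1. split. lra. apply le_glb. intros x [s [Hs ->]]. apply Hg. lra. }
  destruct (Lub_Rbar_correct (fun y => exists d, 0 < d /\ Rbar_le y (Glb_Rbar (fun x => exists s, 0 < s < d /\ x = f s)))) as [_ G2].
  apply G2. intros y [dl [Hdl Hy]].
  assert (Hfy : forall s, 0 < s < dl -> y <= f s).
  { intros s Hs. pose proof (in_glb (fun x => exists s, 0 < s < dl /\ x = f s) (f s) ltac:(exists s; auto)).
    pose proof (Rbar_le_trans' _ _ _ Hy H). simpl in H0. auto. }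
  destruct (Rle_dec y 0) as [Hy0|Hy0].
  { eapply Rbar_le_trans'. 2: exact H0g. simpl. auto. }
  assert (Hb : forall e, 0 < e -> Rbar_le (y / (1 + e) - e) (Lub_Rbar Sg)).
  { intros e He. apply in_lub. destruct (Hyp e He) as [lam [Hlam [d [Hd Hf]]]].
    exists (lam * Rmin d dl). split. apply Rmult_lt_0_compat; auto. apply Rmin_pos; auto.
    apply le_glb. intros x [s [Hs ->]].
    set (u := s / lam).
    assert (Hu : 0 < u < Rmin d dl).
    { unfold u. split. apply Rdiv_lt_0_compat; lra. apply (Rmult_lt_reg_l lam); auto.
      replace (lam * (s / lam)) with s by (field; lra). lra. }
    assert (u < d) by (pose proof (Rmin_l d dl); lra). assert (u < dl) by (pose proof (Rmin_r d dl); lra).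
    pose proof (Hf u ltac:(lra)) as F1. pose proof (Hfy u ltac:(lra)) as F2.
    replace (lam * u) with s in F1 by (unfold u; field; lra).
    assert (y <= (1 + e) * (g s + e)) by lra.
    assert (y / (1 + e) <= g s + e).
    { apply (Rmult_le_reg_l (1 + e)). lra. replace ((1 + e) * (y / (1 + e))) with y by (field; lra). lra. }
    lra. }
  revert Hb H0g. generalize (Lub_Rbar Sg). intros r Hb H0g.
  destruct r as [l| |].
  - simpl. apply RL2. lra. intros e He. specialize (Hb e He). simpl in Hb. exact Hb.
  - simpl. auto.
  - simpl in H0g. contradiction.
Qed.

Lemma LIM_EQ f g : (forall s, 0 < s -> 0 <= f s) -> (forall s, 0 < s -> 0 <= g s) -> HYP f g -> HYP g f ->
  limsup0 f = limsup0 g /\ liminf0 f = liminf0 g.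
Proof.
  intros Hf Hg H1 H2. split; apply Rbar_le_antisym.
  apply LIMSUP; auto. apply LIMSUP; auto. apply LIMINF; auto. apply LIMINF; auto.
Qed.

Lemma unif_t0 (P : nat -> R -> Prop) n : (forall k, (k < n)%nat -> exists t0, 0 < t0 /\ P k t0) ->
  (forall k t t', 0 < t' -> t' <= t -> P k t -> P k t') -> exists t0, 0 < t0 /\ forall k, (k < n)%nat -> P k t0.
Proof.
  intros H Hm. induction n. exists 1. split. lra. intros; lia.
  destruct IHn as [t1 [h1 h2]]. intros; apply H; lia.
  destruct (H n ltac:(lia)) as [t2 [h3 h4]].
  exists (Rmin t1 t2). split. apply Rmin_pos; auto. intros k Hk. destruct (Nat.eq_dec k n).
  subst. apply (Hm n t2); auto. apply Rmin_pos; auto. apply Rmin_r.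
  apply (Hm k t1); auto. apply Rmin_pos; auto. apply Rmin_l. apply h2; lia.
Qed.

Lemma RP_id s eta g : 0 < s -> 0 < eta -> 0 < g ->
  Rpower s (/ g) * Rpower (eta * s ^ 2) (- / (2 * g)) = Rpower eta (- / (2 * g)).
Proof.
  intros Hs He Hg. unfold Rpower. rewrite <- exp_plus. f_equal.
  rewrite ln_mult, ln_pow by (auto; apply pow_lt; auto). simpl. field. lra.
Qed.

Lemma Rpower_lt_base a b c : 0 < c -> 0 < a -> a < b -> Rpower a c < Rpower b c.
Proof. intros; apply Rlt_Rpower_l; auto. Qed.

Lemma Rpower_inv_pow c g : 0 < c -> 0 < g -> Rpower (Rpower c g) (/ g) = c.
Proof. intros Hc Hg. rewrite Rpower_mult. replace (g * / g) with 1 by (field; lra). apply Rpower_1; auto. Qed.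

Lemma Rpower_mult_base a b c : 0 < a -> 0 < b -> Rpower (a * b) c = Rpower a c * Rpower b c.
Proof. intros. rewrite Rpower_mult_distr; auto. Qed.

Lemma lin_comp (X Y Z : SIP) (T : X -> Y) (U : Y -> Z) : linear X Y T -> linear Y Z U -> linear X Z (fun x => U (T x)).
Proof. intros [a1 a2] [b1 b2]. split; intros. rewrite a1, b1; auto. rewrite a2, b2; auto. Qed.

Lemma bnd_comp (X Y Z : SIP) (T : X -> Y) (U : Y -> Z) C1 C2 : 0 <= C2 -> bnd X Y T C1 -> bnd Y Z U C2 -> bnd X Z (fun x => U (T x)) (C2 * C1).
Proof. intros H2 h1 h2 x. eapply Rle_trans. apply h2. rewrite Rmult_assoc. apply Rmult_le_compat_l; auto. Qed.

Section Main.
Variable H : Hilbert.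
Notation X := (SH H).
Variable L : nat.
Hypothesis HL1 : (1 <= L)%nat.
Variable A : H -> H.
Variables Ak Aks : nat -> H -> H.
Hypothesis HA : is_compact_op H A.
Hypothesis HAk : forall k, (k < L)%nat -> is_compact_op H (Ak k).
Hypothesis HAdj : forall k, (k < L)%nat -> is_adjoint H (Ak k) (Aks k).
Hypothesis HAsum : forall x, A x = hsum H L (fun k => Ak k x).

Lemma linAk k : (k < L)%nat -> linear X X (Ak k).
Proof. intro Hk. exact (proj1 (HAk k Hk)). Qed.
Lemma cptAk k : (k < L)%nat -> cpt X X (Ak k).
Proof. intro Hk. exact (proj2 (HAk k Hk)). Qed.
Lemma adjAk k : (k < L)%nat -> adj X X (Ak k) (Aks k).
Proof. intro Hk. exact (HAdj k Hk). Qed.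
Lemma adjAks k : (k < L)%nat -> adj X X (Aks k) (Ak k).
Proof. intros Hk x y. rewrite (adj_sym X X (Ak k) (Aks k) (adjAk k Hk)). auto. Qed.
Lemma linAks k : (k < L)%nat -> linear X X (Aks k).
Proof. intro Hk. apply (adj_linear X X (Hdef H) (Ak k)). apply linAk; auto. apply adjAk; auto. Qed.

Lemma CAk : exists C, 0 < C /\ forall k, (k < L)%nat -> bnd X X (Ak k) C /\ bnd X X (Aks k) C.
Proof.
  destruct (unif_bnd X X L Ak) as [C [HC Hb]].
  { intros k Hk. apply cpt_bnd. apply Hdef. apply linAk; auto. apply cptAk; auto. }
  exists C. split; auto. intros k Hk. split; auto. apply (adj_bnd X X (Ak k)); auto. apply adjAk; auto.
Qed.

Definition As (y : H) : H := hsum H L (fun k => Aks k y).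

Lemma linA : linear X X A.
Proof. exact (proj1 HA). Qed.

Lemma adjA : adj X X A As.
Proof.
  intros x y. rewrite HAsum. unfold As. change (hsum H) with (ssum X).
  rewrite sinn_sum_l, sinn_sum_r. apply csum_ext. intros k Hk. apply adjAk; auto.
Qed.

Lemma G_A : Good X X A As.
Proof.
  destruct (cpt_bnd X X (Hdef H) A linA (proj2 HA)) as [C [HC Hb]].
  split. apply linA. split. apply adjA. split. eauto.
  apply (cpt_comp_l X X X A As C). exact (proj2 HA). apply (adj_linear X X (Hdef H) A); auto. apply linA. apply adjA.
  auto. apply (adj_bnd X X A); auto. apply adjA.
Qed.

Lemma G_Ak k : (k < L)%nat -> Good X X (Ak k) (Aks k).
Proof.
  intro Hk. destruct CAk as [C [HC Hb]].
  split. apply linAk; auto. split. apply adjAk; auto. split. exists C. split; auto. apply Hb; auto.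
  apply (cpt_comp_l X X X (Ak k) (Aks k) C). apply cptAk; auto. apply linAks; auto. auto. apply Hb; auto.
Qed.

Lemma G_Aks k : (k < L)%nat -> Good X X (Aks k) (Ak k).
Proof.
  intro Hk. destruct CAk as [C [HC Hb]].
  split. apply linAks; auto. split. apply adjAks; auto. split. exists C. split; auto. apply Hb; auto.
  apply (cpt_comp_r X X X (Aks k) (Ak k) C). apply cptAk; auto. auto. apply Hb; auto.
Qed.

Definition c1 k j := fun x => Aks k (Ak j x).
Definition c1s k j := fun y => Aks j (Ak k y).
Definition c2 k j := fun x => Ak j (Aks k x).
Definition c2s k j := fun y => Ak k (Aks j y).

Lemma G_c1 k j : (k < L)%nat -> (j < L)%nat -> Good X X (c1 k j) (c1s k j).
Proof.
  intros Hk Hj. destruct CAk as [C [HC Hb]].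
  split. unfold c1. apply (lin_comp X X X (Ak j) (Aks k)). apply linAk; auto. apply linAks; auto.
  split. intros x y. unfold c1, c1s. rewrite (adj_sym X X (Ak k) (Aks k) (adjAk k Hk)). apply adjAk; auto.
  split. exists (C * C). split. nra. unfold c1. apply (bnd_comp X X X (Ak j) (Aks k)). lra. apply Hb; auto. apply Hb; auto.
  unfold SS, c1, c1s.
  apply (cpt_comp_l X X X (fun x => Ak k (Aks k (Ak j x))) (Aks j) C).
  apply (cpt_comp_l X X X (fun x => Aks k (Ak j x)) (Ak k) C).
  apply (cpt_comp_l X X X (Ak j) (Aks k) C).
  apply cptAk; auto. apply linAks; auto. auto. apply Hb; auto.
  apply linAk; auto. auto. apply Hb; auto. apply linAks; auto. auto. apply Hb; auto.
Qed.

Lemma G_c2 k j : (k < L)%nat -> (j < L)%nat -> Good X X (c2 k j) (c2s k j).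
Proof.
  intros Hk Hj. destruct CAk as [C [HC Hb]].
  split. unfold c2. apply (lin_comp X X X (Aks k) (Ak j)). apply linAks; auto. apply linAk; auto.
  split. intros x y. unfold c2, c2s. rewrite (adjAk j Hj). apply adjAks; auto.
  split. exists (C * C). split. nra. unfold c2. apply (bnd_comp X X X (Aks k) (Ak j)). lra. apply Hb; auto. apply Hb; auto.
  unfold SS, c2, c2s.
  apply (cpt_comp_r X X X (fun x => Aks j (Ak j (Aks k x))) (Ak k) (C * (C * C))).
  apply cptAk; auto. apply Rmult_lt_0_compat; nra.
  apply (bnd_comp X X X (fun x => Ak j (Aks k x)) (Aks j)). lra.
  apply (bnd_comp X X X (Aks k) (Ak j)). lra. apply Hb; auto. apply Hb; auto. apply Hb; auto.
Qed.

Notation Y := (HL H L).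
Definition B := BB H L Ak.
Definition Bs := BBs H L Aks.

Lemma G_B : Good X Y B Bs.
Proof.
  destruct CAk as [C [HC Hb]].
  split. apply BB_linear. intros; apply linAk; auto.
  split. apply BB_adj. intros; apply adjAk; auto.
  split. exists ((INR L + 1) * C). split. pose proof (pos_INR L). nra. apply BB_bnd; auto. intros; apply Hb; auto.
  apply BB_cpt. intros k Hk. apply (cpt_comp_l X X X (Ak k) (Aks k) C). apply cptAk; auto. apply linAks; auto. auto. apply Hb; auto.
Qed.


Definition famP (T Ts : H -> H) (s : R) (e : list X) := ncount H s T = INR (length e) /\ ONL X e /\ EIGa X X T Ts (s ^ 2) e /\ forall x, orthL X e x -> nrm2 X (T x) <= s ^ 2 * nrm2 X x.
Definition fam T Ts s := epsilon (inhabits nil) (famP T Ts s).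
Lemma fam_spec T Ts s : Good X X T Ts -> 0 < s -> famP T Ts s (fam T Ts s).
Proof. intros HG Hs. unfold fam. apply epsilon_spec. apply Good_count; auto. Qed.

Definition famBP (a : R) (e : list X) := ONL X e /\ EIGa X Y B Bs a e /\ forall x, orthL X e x -> nrm2 Y (B x) <= a * nrm2 X x.
Definition famB a := epsilon (inhabits nil) (famBP a).
Lemma famB_spec a : 0 < a -> famBP a (famB a).
Proof. intros Ha. unfold famB. apply epsilon_spec. apply Good_spec; auto. apply Hdef. apply G_B. Qed.

Definition FC1 d := flat_map (fun k => flat_map (fun j => if Nat.eqb k j then nil else fam (c1 k j) (c1s k j) d) (seq 0 L)) (seq 0 L).
Definition Ec1 d := rsum L (fun k => rsum L (fun j => if Nat.eqb k j then 0 else ncount H d (c1 k j))).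
Definition FC2 d : list Y := flat_map (fun k => flat_map (fun j => if Nat.eqb k j then nil else map (iota H L k) (fam (c2 k j) (c2s k j) d)) (seq 0 L)) (seq 0 L).
Definition Ec2 d := rsum L (fun k => rsum L (fun j => if Nat.eqb k j then 0 else ncount H d (c2 k j))).

Lemma len_FC1 d : 0 < d -> INR (length (FC1 d)) = Ec1 d.
Proof.
  intro Hd. unfold FC1, Ec1. rewrite len_flat. apply rsum_ext. intros k Hk. rewrite len_flat. apply rsum_ext. intros j Hj.
  destruct (Nat.eqb_spec k j). auto. destruct (fam_spec (c1 k j) (c1s k j) d (G_c1 k j Hk Hj) Hd) as [E _]. auto.
Qed.

Lemma len_FC2 d : 0 < d -> INR (length (FC2 d)) = Ec2 d.
Proof.
  intro Hd. unfold FC2, Ec2. rewrite len_flat. apply rsum_ext. intros k Hk. rewrite len_flat. apply rsum_ext. intros j Hj.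
  destruct (Nat.eqb_spec k j). auto. rewrite length_map. destruct (fam_spec (c2 k j) (c2s k j) d (G_c2 k j Hk Hj) Hd) as [E _]. auto.
Qed.

Lemma orth_FC1 d x : 0 < d -> orthL X (FC1 d) x -> forall k j, (k < L)%nat -> (j < L)%nat -> k <> j ->
  nrm2 X (c1 k j x) <= d * d * nrm2 X x.
Proof.
  intros Hd Ho k j Hk Hj Hkj. pose proof (orth_flat X _ L x Ho k Hk) as O1.
  pose proof (orth_flat X _ L x O1 j Hj) as O2. simpl in O2.
  replace (Nat.eqb k j) with false in O2 by (symmetry; apply Nat.eqb_neq; auto).
  destruct (fam_spec (c1 k j) (c1s k j) d (G_c1 k j Hk Hj) Hd) as [_ [_ [_ P]]].
  replace (d * d) with (d ^ 2) by ring. apply P; auto.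
Qed.

Lemma orth_FC2 d (y : Y) : 0 < d -> orthL Y (FC2 d) y -> forall k j, (k < L)%nat -> (j < L)%nat -> k <> j ->
  nrm2 X (c2 k j (y k)) <= d * d * nrm2 X (y k).
Proof.
  intros Hd Ho k j Hk Hj Hkj. pose proof (orth_flat Y _ L y Ho k Hk) as O1.
  pose proof (orth_flat Y _ L y O1 j Hj) as O2. simpl in O2.
  replace (Nat.eqb k j) with false in O2 by (symmetry; apply Nat.eqb_neq; auto).
  destruct (fam_spec (c2 k j) (c2s k j) d (G_c2 k j Hk Hj) Hd) as [_ [_ [_ P]]].
  replace (d * d) with (d ^ 2) by ring. apply P; auto.
  intros f Hf. rewrite <- (iota_inn H L y k f Hk). apply O2. apply in_map; auto.
Qed.

Lemma CL1 d x : 0 < d -> orthL X (FC1 d) x ->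
  Rabs (nrm2 X (A x) - nrm2 Y (B x)) <= INR L * INR L * (2 * d * nrm2 X x).
Proof.
  intros Hd Ho. rewrite HAsum. change (hsum H) with (ssum X). rewrite nrm2_ssum.
  unfold B. rewrite BB_nrm2. apply DS. pose proof (nrm2_pos X x). nra.
  intros k j Hk Hj Hkj. rewrite (adjAk k Hk). rewrite re_sym. fold (c1 k j x).
  replace (2 * d * nrm2 X x) with (d * (nrm2 X x + nrm2 X x)) by ring.
  apply AMB; auto. apply orth_FC1; auto.
Qed.

Lemma CL2 d (y : Y) : 0 < d -> orthL Y (FC2 d) y ->
  Rabs (nrm2 X (Bs y) - rsum L (fun k => nrm2 X (Aks k (y k)))) <= INR L * INR L * (2 * d * nrm2 Y y).
Proof.
  intros Hd Ho. unfold Bs, BBs. change (hsum H) with (ssum X). rewrite nrm2_ssum.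
  apply DS. pose proof (nrm2_pos Y y). nra.
  intros k j Hk Hj Hkj. rewrite <- (adjAk j Hj). fold (c2 k j (y k)).
  eapply Rle_trans. apply (AMB X (c2 k j (y k)) (y k) (y j) d Hd). apply orth_FC2; auto.
  rewrite HL_nrm2. pose proof (rsum_ge_term L (fun k => nrm2 X (y k)) k Hk ltac:(intros; apply nrm2_pos)).
  pose proof (rsum_ge_term L (fun k => nrm2 X (y k)) j Hj ltac:(intros; apply nrm2_pos)). simpl in *. nra.
Qed.


Definition FA k s := fam (Aks k) (Ak k) s.
Definition FAL s : list Y := flat_map (fun k => map (iota H L k) (FA k s)) (seq 0 L).

Lemma FA_spec k s : (k < L)%nat -> 0 < s -> famP (Aks k) (Ak k) s (FA k s).
Proof. intros Hk Hs. apply fam_spec; auto. apply G_Aks; auto. Qed.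

Lemma ONL_map_iota k l : (k < L)%nat -> ONL X l -> ONL Y (map (iota H L k) l).
Proof.
  intros Hk. induction l as [|u t IH]; cbn [ONL map]; auto. intros [h1 [h2 h3]]. split; [|split]; auto.
  - unfold nrm2. rewrite iota_iota, Nat.eqb_refl by auto. apply h1.
  - intros v Hv. apply in_map_iff in Hv. destruct Hv as [w [<- Hw]]. rewrite iota_iota, Nat.eqb_refl by auto. auto.
Qed.

Lemma ONL_FAL s : 0 < s -> ONL Y (FAL s).
Proof.
  intros Hs. unfold FAL. assert (forall n, (n <= L)%nat -> ONL Y (flat_map (fun k => map (iota H L k) (FA k s)) (seq 0 n))).
  { induction n; intros Hn. simpl; auto. rewrite seq_S, flat_map_app. simpl. rewrite app_nil_r.
    apply ONL_app. apply IHn; lia. apply ONL_map_iota. lia. destruct (FA_spec n s ltac:(lia) Hs) as [_ [O _]]; auto.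
    intros u w Hu Hw. apply in_flat_map in Hu. destruct Hu as [k' [Hk' Hu]]. apply in_seq in Hk'.
    apply in_map_iff in Hu. destruct Hu as [u' [<- _]]. apply in_map_iff in Hw. destruct Hw as [w' [<- _]].
    rewrite iota_iota by lia. replace (Nat.eqb n k') with false; auto. symmetry; apply Nat.eqb_neq; lia. }
  apply H0; lia.
Qed.

Lemma len_FAL s : 0 < s -> INR (length (FAL s)) = rsum L (fun k => ncount H s (Ak k)).
Proof.
  intros Hs. unfold FAL. rewrite len_flat. apply rsum_ext. intros k Hk. rewrite length_map.
  destruct (FA_spec k s Hk Hs) as [E _]. transitivity (ncount H s (Aks k)). rewrite E; reflexivity. apply Rle_antisym.
  apply count_sym; auto. apply G_Aks; auto. apply G_Ak; auto.
  apply count_sym; auto. apply G_Ak; auto. apply G_Aks; auto.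
Qed.

Lemma orth_FAL s (y : Y) : orthL Y (FAL s) y -> forall k, (k < L)%nat -> orthL X (FA k s) (y k).
Proof.
  intros Ho k Hk f Hf. rewrite <- (iota_inn H L y k f Hk). apply (orth_flat Y _ L y Ho k Hk). apply in_map; auto.
Qed.

Lemma span_FAL s (y : Y) : inspan Y (FAL s) y -> forall k, (k < L)%nat -> inspan X (FA k s) (y k).
Proof.
  revert y. apply (span_ind Y (fun y => forall k, (k < L)%nat -> inspan X (FA k s) (y k))).
  - intros; apply inspan_0.
  - intros a b Ha Hb k Hk. apply (inspan_add X); auto.
  - intros c a Ha k Hk. apply (inspan_scal X); auto.
  - intros u Hu k Hk. apply in_flat_map in Hu. destruct Hu as [k' [Hk' Hu]]. apply in_map_iff in Hu.
    destruct Hu as [u' [<- Hu']]. unfold iota. destruct (Nat.eqb_spec k k'). subst. apply inspan_In; auto. apply inspan_0.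
Qed.

Lemma pos_pow s : 0 < s -> 0 < s ^ 2.
Proof. intros; apply pow_lt; auto. Qed.

Lemma R1 s a d : 0 < s -> 0 < a -> 0 < d -> a + INR L * INR L * (2 * d) <= s ^ 2 ->
  ncount H s A <= INR (length (famB a)) + Ec1 d.
Proof.
  intros Hs Ha Hd Hc. destruct (fam_spec A As s G_A Hs) as [E [O [G P]]]. rewrite E.
  destruct (famB_spec a Ha) as [OB [GB PB]].
  rewrite <- (len_FC1 d Hd), <- plus_INR, <- length_app. apply le_INR.
  destruct G_A as [HT [HaA _]].
  apply (CMP X (famB a ++ FC1 d) (fam A As s) (fun x => nrm2 X (A x)) (s ^ 2)).
  - intros x Hx. destruct (orth_app X _ _ x Hx) as [h1 h2]. pose proof (PB x h1). pose proof (CL1 d x Hd h2).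
    apply Rabs_le_between in H1. pose proof (nrm2_pos X x).
    assert ((a + INR L * INR L * (2 * d)) * nrm2 X x <= s ^ 2 * nrm2 X x) by (apply Rmult_le_compat_r; auto). nra.
  - apply ONL_nindep; auto.
  - intros x Hx _ Hn. apply (SPEC_span X X (Hdef H) A As HT HaA (s ^ 2) (pos_pow s Hs) (fam A As s) O G x Hx Hn).
Qed.

Lemma R3 s a d : 0 < s -> 0 < a -> 0 < d -> s ^ 2 + INR L * INR L * (2 * d) <= a ->
  INR (length (famB a)) <= ncount H s A + Ec1 d.
Proof.
  intros Hs Ha Hd Hc. destruct (fam_spec A As s G_A Hs) as [E [O [G P]]]. rewrite E.
  destruct (famB_spec a Ha) as [OB [GB PB]].
  rewrite <- (len_FC1 d Hd), <- plus_INR, <- length_app. apply le_INR.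
  destruct G_B as [HT [HaB _]].
  apply (CMP X (fam A As s ++ FC1 d) (famB a) (fun x => nrm2 Y (B x)) a).
  - intros x Hx. destruct (orth_app X _ _ x Hx) as [h1 h2]. pose proof (P x h1). pose proof (CL1 d x Hd h2).
    apply Rabs_le_between in H1. pose proof (nrm2_pos X x).
    assert ((s ^ 2 + INR L * INR L * (2 * d)) * nrm2 X x <= a * nrm2 X x) by (apply Rmult_le_compat_r; auto). nra.
  - apply ONL_nindep; auto.
  - intros x Hx _ Hn. apply (SPEC_span X Y (Hdef H) B Bs HT HaB a Ha (famB a) OB GB x Hx Hn).
Qed.

Lemma R2 s1 a d : 0 < s1 -> 0 < a -> 0 < d -> s1 ^ 2 + INR L * INR L * (2 * d) <= a ->
  INR (length (famB a)) <= rsum L (fun k => ncount H s1 (Ak k)) + Ec2 d.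
Proof.
  intros Hs Ha Hd Hc. destruct (famB_spec a Ha) as [OB [GB PB]].
  rewrite <- (len_FC2 d Hd), <- (len_FAL s1 Hs), <- plus_INR, <- length_app. apply le_INR.
  apply (Nat.le_trans _ (length (map B (famB a)))). rewrite length_map; apply le_n.
  destruct G_B as [HT [HaB _]].
  apply (CMP Y (FAL s1 ++ FC2 d) (map B (famB a)) (fun y => nrm2 X (Bs y)) a).
  - intros y Hy. destruct (orth_app Y _ _ y Hy) as [h1 h2]. pose proof (CL2 d y Hd h2).
    apply Rabs_le_between in H0.
    assert (rsum L (fun k => nrm2 X (Aks k (y k))) <= s1 ^ 2 * nrm2 Y y).
    { rewrite HL_nrm2. rewrite <- rsum_scal. apply rsum_le. intros k Hk.
      destruct (FA_spec k s1 Hk Hs) as [_ [_ [_ P]]]. apply P. apply orth_FAL; auto. }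
    pose proof (nrm2_pos Y y).
    assert ((s1 ^ 2 + INR L * INR L * (2 * d)) * nrm2 Y y <= a * nrm2 Y y) by (apply Rmult_le_compat_r; auto).
    simpl in *. nra.
  - apply (img_nindep X Y B Bs HT HaB a Ha (famB a) OB GB).
  - intros y Hy _ Hn. apply (img_span X Y (Hdef H) B Bs HT HaB a Ha (famB a) OB GB y Hy Hn).
Qed.

Lemma R4 s1 a d : 0 < s1 -> 0 < a -> 0 < d -> a + INR L * INR L * (2 * d) <= s1 ^ 2 ->
  rsum L (fun k => ncount H s1 (Ak k)) <= INR (length (famB a)) + Ec2 d.
Proof.
  intros Hs Ha Hd Hc. destruct (famB_spec a Ha) as [OB [GB PB]].
  assert (EL : INR (length (famB a)) = INR (length (map B (famB a)))) by (rewrite length_map; reflexivity).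
  rewrite EL, <- (len_FC2 d Hd), <- (len_FAL s1 Hs), <- plus_INR, <- length_app. apply le_INR.
  destruct G_B as [HT [HaB _]].
  apply (CMP Y (map B (famB a) ++ FC2 d) (FAL s1) (fun y => nrm2 X (Bs y)) a).
  - intros y Hy. destruct (orth_app Y _ _ y Hy) as [h1 h2]. apply (adjF X Y B Bs HaB a Ha (famB a) OB GB PB y h1).
  - apply ONL_nindep. apply ONL_FAL; auto.
  - intros y Hy Ho Hn. destruct (orth_app Y _ _ y Ho) as [h1 h2]. pose proof (CL2 d y Hd h2) as C2.
    apply Rabs_le_between in C2.
    set (t := fun k => nrm2 X (Aks k (y k)) - s1 ^ 2 * nrm2 X (y k)).
    assert (Ht : forall k, (k < L)%nat -> 0 <= t k /\ (t k = 0 -> nrm2 X (y k) = 0)).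
    { intros k Hk. unfold t. destruct (FA_spec k s1 Hk Hs) as [_ [O [G _]]].
      destruct (G_Aks k Hk) as [HTk [Hak _]].
      destruct (Req_dec (nrm2 X (y k)) 0) as [Z|NZ].
      - rewrite Z. rewrite (Hdef H (y k) Z). rewrite (lin_0 X X (Aks k) HTk). rewrite nrm2_0. split; intros; lra.
      - pose proof (SPEC_span X X (Hdef H) (Aks k) (Ak k) HTk Hak (s1 ^ 2) (pos_pow s1 Hs) (FA k s1) O G (y k)
          (span_FAL s1 y Hy k Hk) NZ). split; intros; lra. }
    assert (Hpos : 0 < rsum L t).
    { destruct (Rlt_le_dec 0 (rsum L t)) as [|Hle]; auto. exfalso. apply Hn.
      pose proof (rsum_zero_all L t (fun k Hk => proj1 (Ht k Hk)) Hle) as Z.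
      rewrite HL_nrm2. rewrite (rsum_ext L _ (fun _ => 0)). rewrite rsum_const. ring.
      intros k Hk. apply (proj2 (Ht k Hk)). apply Z; auto. }
    unfold t in Hpos. rewrite rsum_minus, rsum_scal, <- (HL_nrm2 H L y) in Hpos.
    pose proof (nrm2_pos Y y).
    assert ((a + INR L * INR L * (2 * d)) * nrm2 Y y <= s1 ^ 2 * nrm2 Y y) by (apply Rmult_le_compat_r; auto).
    simpl in *. nra.
Qed.

Lemma UP s s1 d : 0 < s -> 0 < s1 -> 0 < d -> s1 ^ 2 + INR L * INR L * (4 * d) <= s ^ 2 ->
  ncount H s A <= rsum L (fun k => ncount H s1 (Ak k)) + Ec1 d + Ec2 d.
Proof.
  intros Hs Hs1 Hd Hc. set (a := s1 ^ 2 + INR L * INR L * (2 * d)).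
  assert (0 < a). { unfold a. pose proof (pos_pow s1 Hs1). pose proof (pos_INR L). assert (0 <= INR L * INR L) by nra. nra. }
  pose proof (R1 s a d Hs H0 Hd ltac:(unfold a; lra)).
  pose proof (R2 s1 a d Hs1 H0 Hd ltac:(unfold a; lra)). lra.
Qed.

Lemma LO s s1 d : 0 < s -> 0 < s1 -> 0 < d -> s ^ 2 + INR L * INR L * (4 * d) <= s1 ^ 2 ->
  rsum L (fun k => ncount H s1 (Ak k)) <= ncount H s A + Ec1 d + Ec2 d.
Proof.
  intros Hs Hs1 Hd Hc. set (a := s ^ 2 + INR L * INR L * (2 * d)).
  assert (0 < a). { unfold a. pose proof (pos_pow s Hs). pose proof (pos_INR L). assert (0 <= INR L * INR L) by nra. nra. }
  pose proof (R3 s a d Hs H0 Hd ltac:(unfold a; lra)).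
  pose proof (R4 s1 a d Hs1 H0 Hd ltac:(unfold a; lra)). lra.
Qed.


Variable gamma : R.
Hypothesis Hgam : 0 < gamma.
Hypothesis HS : forall j k, (j < L)%nat -> (k < L)%nat -> j <> k ->
  Sigma0 H (2 * gamma) (fun x => Aks k (Ak j x)) /\ Sigma0 H (2 * gamma) (fun x => Ak k (Aks j x)).

Definition PB e t0 := forall t, 0 < t < t0 -> forall k j, (k < L)%nat -> (j < L)%nat -> k <> j ->
  ln (ncount H t (c1 k j) + 1) <= e * Rpower t (- / (2 * gamma)) /\
  ln (ncount H t (c2 k j) + 1) <= e * Rpower t (- / (2 * gamma)).

Lemma pair_bound e : 0 < e -> exists t0, 0 < t0 /\ PB e t0.
Proof.
  intros He.
  set (Q := fun k t0 => forall t, 0 < t < t0 -> forall j, (j < L)%nat -> k <> j ->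
    ln (ncount H t (c1 k j) + 1) <= e * Rpower t (- / (2 * gamma)) /\
    ln (ncount H t (c2 k j) + 1) <= e * Rpower t (- / (2 * gamma))).
  destruct (unif_t0 Q L) as [t0 [Ht0 Hq]].
  - intros k Hk.
    set (Qj := fun j t0 => k <> j -> forall t, 0 < t < t0 ->
      ln (ncount H t (c1 k j) + 1) <= e * Rpower t (- / (2 * gamma)) /\
      ln (ncount H t (c2 k j) + 1) <= e * Rpower t (- / (2 * gamma))).
    destruct (unif_t0 Qj L) as [t1 [Ht1 Hq1]].
    + intros j Hj. destruct (Nat.eq_dec k j) as [Ekj|Nkj].
      * exists 1. split. lra. intro; contradiction.
      * destruct (HS j k Hj Hk (not_eq_sym Nkj)) as [S1 _]. destruct (HS k j Hk Hj Nkj) as [_ S2].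
        destruct (SB H (c1 k j) (c1s k j) (2 * gamma) (G_c1 k j Hk Hj) ltac:(lra) S1 e He) as [ta [Hta Pa]].
        destruct (SB H (c2 k j) (c2s k j) (2 * gamma) (G_c2 k j Hk Hj) ltac:(lra) S2 e He) as [tb [Htb Pb]].
        exists (Rmin ta tb). split. apply Rmin_pos; auto. intros _ t Ht.
        pose proof (Rmin_l ta tb). pose proof (Rmin_r ta tb).
        split. apply Pa; lra. apply Pb; lra.
    + intros j t t' Ht' Htt HQ Hkj t2 Ht2. apply HQ; auto. lra.
    + exists t1. split; auto. intros t Ht j Hj Hkj. apply (Hq1 j Hj Hkj t Ht).
  - intros k t t' Ht' Htt HQ t2 Ht2. apply HQ. lra.
  - exists t0. split; auto. intros t Ht k j Hk Hj Hkj. apply (Hq k Hk t Ht j Hj Hkj).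
Qed.

Lemma cnt_le T Ts t e R0 : Good X X T Ts -> 0 < t -> ln (ncount H t T + 1) <= e * R0 -> ncount H t T <= exp (e * R0) - 1.
Proof.
  intros HG Ht Hl. pose proof (ncount_nonneg H T Ts t HG Ht).
  apply exp_le' in Hl. rewrite exp_ln in Hl by lra. lra.
Qed.

Lemma Ec_bound e t0 t : 0 < e -> PB e t0 -> 0 < t < t0 ->
  INR L * (1 + Ec1 t + Ec2 t) <= 2 * INR L * INR L * INR L * exp (e * Rpower t (- / (2 * gamma))).
Proof.
  intros He HP Ht. set (Q := exp (e * Rpower t (- / (2 * gamma)))).
  assert (HQ : 1 <= Q).
  { unfold Q. rewrite <- exp_0. apply exp_le'. pose proof (Rpower_pos t (- / (2 * gamma))). nra. }
  assert (E1 : Ec1 t <= INR L * (INR L * (Q - 1))).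
  { unfold Ec1. rewrite <- !rsum_const. apply rsum_le. intros k Hk. apply rsum_le. intros j Hj.
    destruct (Nat.eqb_spec k j). lra.
    apply (cnt_le (c1 k j) (c1s k j)). apply G_c1; auto. lra. apply (HP t Ht k j Hk Hj n). }
  assert (E2 : Ec2 t <= INR L * (INR L * (Q - 1))).
  { unfold Ec2. rewrite <- !rsum_const. apply rsum_le. intros k Hk. apply rsum_le. intros j Hj.
    destruct (Nat.eqb_spec k j). lra.
    apply (cnt_le (c2 k j) (c2s k j)). apply G_c2; auto. lra. apply (HP t Ht k j Hk Hj n). }
  assert (HL : 1 <= INR L) by (apply (le_INR 1); auto).
  assert (1 + Ec1 t + Ec2 t <= 2 * INR L * INR L * Q) by nra.
  assert (INR L * (1 + Ec1 t + Ec2 t) <= INR L * (2 * INR L * INR L * Q)) by (apply Rmult_le_compat_l; lra).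
  lra.
Qed.

Definition KK := 2 * INR L * INR L * INR L.

Lemma KK_ge : 2 <= KK.
Proof. unfold KK. assert (1 <= INR L) by (apply (le_INR 1); auto). assert (1 <= INR L * INR L) by nra. nra. Qed.

Lemma Ec_nonneg t : 0 < t -> 0 <= Ec1 t /\ 0 <= Ec2 t.
Proof.
  intros Ht. split; apply rsum_nonneg; intros k Hk; apply rsum_nonneg; intros j Hj; destruct (Nat.eqb_spec k j); try lra.
  apply (ncount_nonneg H (c1 k j) (c1s k j)); auto. apply G_c1; auto.
  apply (ncount_nonneg H (c2 k j) (c2s k j)); auto. apply G_c2; auto.
Qed.

Lemma ERR eta eps : 0 < eta -> 0 < eps -> exists d, 0 < d /\ forall s, 0 < s < d ->
  Rpower s (/ gamma) * ln (INR L * (1 + Ec1 (eta * s ^ 2) + Ec2 (eta * s ^ 2))) <= eps.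
Proof.
  intros Heta Heps.
  set (R0 := Rpower eta (- / (2 * gamma))).
  assert (HR0 : 0 < R0) by apply Rpower_pos.
  set (e := (eps / 2) / R0).
  assert (He : 0 < e) by (unfold e; apply Rdiv_lt_0_compat; lra).
  destruct (pair_bound e He) as [t0 [Ht0 HP]].
  pose proof KK_ge as HK.
  assert (HlnK : 0 <= ln KK) by (rewrite <- ln_1; apply ln_le; lra).
  set (c := (eps / 2) / (ln KK + 1)).
  assert (Hc : 0 < c) by (unfold c; apply Rdiv_lt_0_compat; lra).
  exists (Rmin (Rpower c gamma) (sqrt (t0 / eta))). split.
  { apply Rmin_pos. apply Rpower_pos. apply sqrt_lt_R0. apply Rdiv_lt_0_compat; auto. }
  intros s [Hs Hsd].
  assert (Hs1 : s < Rpower c gamma) by (pose proof (Rmin_l (Rpower c gamma) (sqrt (t0 / eta))); lra).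
  assert (Hs2 : s < sqrt (t0 / eta)) by (pose proof (Rmin_r (Rpower c gamma) (sqrt (t0 / eta))); lra).
  set (t := eta * s ^ 2).
  assert (Ht : 0 < t < t0).
  { unfold t. split. apply Rmult_lt_0_compat; auto. apply pow_lt; auto.
    assert (s * s < sqrt (t0 / eta) * sqrt (t0 / eta)) by nra.
    rewrite sqrt_sqrt in H0 by (left; apply Rdiv_lt_0_compat; auto).
    apply (Rmult_lt_compat_l eta) in H0; auto. replace (eta * (t0 / eta)) with t0 in H0 by (field; lra). simpl. lra. }
  pose proof (Ec_bound e t0 t He HP Ht) as EB. fold KK in EB.
  destruct (Ec_nonneg t (proj1 Ht)) as [N1 N2].
  assert (HLpos : 1 <= INR L) by (apply (le_INR 1); auto).
  assert (Hln : ln (INR L * (1 + Ec1 t + Ec2 t)) <= ln KK + e * Rpower t (- / (2 * gamma))).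
  { eapply Rle_trans. apply ln_le. nra. exact EB. rewrite ln_mult by (try lra; apply exp_pos). rewrite ln_exp. lra. }
  assert (Hsg : 0 < Rpower s (/ gamma)) by apply Rpower_pos.
  assert (Hsc : Rpower s (/ gamma) < c).
  { rewrite <- (Rpower_inv_pow c gamma) by auto. apply Rpower_lt_base; auto. apply Rinv_0_lt_compat; auto. }
  assert (Id : Rpower s (/ gamma) * Rpower t (- / (2 * gamma)) = R0) by (unfold t, R0; apply RP_id; auto).
  eapply Rle_trans. apply Rmult_le_compat_l. lra. exact Hln.
  rewrite Rmult_plus_distr_l.
  replace (Rpower s (/ gamma) * (e * Rpower t (- / (2 * gamma)))) with (e * R0) by (rewrite <- Id; ring).
  assert (e * R0 = eps / 2) by (unfold e; field; lra).
  assert (Rpower s (/ gamma) * ln KK <= c * ln KK) by (apply Rmult_le_compat_r; lra).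
  assert (c * ln KK <= eps / 2).
  { unfold c. apply (Rmult_le_reg_r (ln KK + 1)). lra. replace (eps / 2 / (ln KK + 1) * ln KK * (ln KK + 1)) with (eps / 2 * ln KK) by (field; lra). nra. }
  lra.
Qed.


Definition ff s := Rpower s (/ gamma) * ln (ntilde H s A).
Definition gg s := Rpower s (/ gamma) * ln (rsum L (fun k => ntilde H s (Ak k))).

Lemma G_eq s : rsum L (fun k => ntilde H s (Ak k)) = rsum L (fun k => ncount H s (Ak k)) + 2 * INR L.
Proof. unfold ntilde. rewrite rsum_plus, rsum_const. ring. Qed.

Lemma sum_nonneg s : 0 < s -> 0 <= rsum L (fun k => ncount H s (Ak k)).
Proof. intros Hs. apply rsum_nonneg. intros k Hk. apply (ncount_nonneg H (Ak k) (Aks k)); auto. apply G_Ak; auto. Qed.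

Lemma nA_nonneg s : 0 < s -> 0 <= ncount H s A.
Proof. intros Hs. apply (ncount_nonneg H A As); auto. apply G_A. Qed.

Lemma LLge : 1 <= INR L.
Proof. apply (le_INR 1); auto. Qed.

Lemma ff_nonneg s : 0 < s -> 0 <= ff s.
Proof.
  intros Hs. unfold ff, ntilde. pose proof (nA_nonneg s Hs). pose proof (Rpower_pos s (/ gamma)).
  assert (0 <= ln (ncount H s A + 2)) by (rewrite <- ln_1; apply ln_le; lra). nra.
Qed.

Lemma gg_nonneg s : 0 < s -> 0 <= gg s.
Proof.
  intros Hs. unfold gg. rewrite G_eq. pose proof (sum_nonneg s Hs). pose proof (Rpower_pos s (/ gamma)). pose proof LLge.
  assert (0 <= ln (rsum L (fun k => ncount H s (Ak k)) + 2 * INR L)) by (rewrite <- ln_1; apply ln_le; lra). nra.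
Qed.

Lemma HYP1 : HYP ff gg.
Proof.
  intros eps Heps.
  set (kap := Rpower (1 + eps) (- gamma)).
  assert (Hk0 : 0 < kap) by apply Rpower_pos.
  assert (Hk1 : kap < 1).
  { unfold kap, Rpower.
    assert (0 < ln (1 + eps)) by (rewrite <- ln_1; apply ln_increasing; lra).
    assert (0 < gamma * ln (1 + eps)) by (apply Rmult_lt_0_compat; auto).
    assert (H9 : exp (- gamma * ln (1 + eps)) < exp 0) by (apply exp_increasing; nra).
    rewrite exp_0 in H9. exact H9. }
  assert (Hkg : Rpower kap (/ gamma) = / (1 + eps)).
  { unfold kap. rewrite Rpower_mult. replace (- gamma * / gamma) with (Ropp 1) by (field; lra).
    rewrite Rpower_Ropp, Rpower_1; auto; lra. }
  pose proof LLge as HL.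
  set (eta := (1 - kap ^ 2) / (4 * (INR L * INR L))).
  assert (Heta : 0 < eta). { unfold eta. apply Rdiv_lt_0_compat. simpl; nra. nra. }
  destruct (ERR eta eps Heta Heps) as [d [Hd Herr]].
  exists kap. split; auto. exists d. split; auto. intros s Hs.
  set (dl := eta * s ^ 2).
  assert (Hdl : 0 < dl) by (unfold dl; apply Rmult_lt_0_compat; auto; apply pow_lt; lra).
  assert (Hks : 0 < kap * s) by nra.
  assert (Cond : (kap * s) ^ 2 + INR L * INR L * (4 * dl) <= s ^ 2).
  { unfold dl, eta. right. field. nra. }
  pose proof (UP s (kap * s) dl ltac:(lra) Hks Hdl Cond) as U.
  pose proof (Herr s Hs) as Er. fold dl in Er.
  destruct (Ec_nonneg dl Hdl) as [N1 N2].
  set (E := Ec1 dl + Ec2 dl) in *.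
  set (G := rsum L (fun k => ntilde H (kap * s) (Ak k))).
  assert (HG : G = rsum L (fun k => ncount H (kap * s) (Ak k)) + 2 * INR L) by apply G_eq.
  pose proof (sum_nonneg (kap * s) Hks).
  assert (HG2 : 2 <= G) by lra.
  assert (Hnt : ntilde H s A <= G * (INR L * (1 + Ec1 dl + Ec2 dl))).
  { unfold ntilde. assert (G * (INR L * (1 + Ec1 dl + Ec2 dl)) >= G * (1 + E)).
    { apply Rle_ge. apply Rmult_le_compat_l. lra. unfold E. nra. }
    unfold E in *. nra. }
  assert (Hln : ln (ntilde H s A) <= ln G + ln (INR L * (1 + Ec1 dl + Ec2 dl))).
  { rewrite <- ln_mult by nra. apply ln_le; auto. unfold ntilde. pose proof (nA_nonneg s (proj1 Hs)). lra. }
  assert (Hsp : Rpower s (/ gamma) = (1 + eps) * Rpower (kap * s) (/ gamma)).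
  { rewrite Rpower_mult_base by lra. rewrite Hkg. field. lra. }
  unfold ff, gg. fold G.
  pose proof (Rpower_pos s (/ gamma)).
  assert (Hmain : Rpower s (/ gamma) * ln (ntilde H s A) <= Rpower s (/ gamma) * ln G + eps).
  { eapply Rle_trans. apply Rmult_le_compat_l. lra. exact Hln. rewrite Rmult_plus_distr_l. lra. }
  rewrite Hsp in Hmain |- *. assert (eps <= (1 + eps) * eps) by nra.
  replace ((1 + eps) * (Rpower (kap * s) (/ gamma) * ln G + eps)) with ((1 + eps) * Rpower (kap * s) (/ gamma) * ln G + (1 + eps) * eps) by ring.
  lra.
Qed.

Lemma HYP2 : HYP gg ff.
Proof.
  intros eps Heps.
  set (kap := Rpower (1 + eps) gamma).
  assert (Hk0 : 0 < kap) by apply Rpower_pos.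
  assert (Hk1 : 1 < kap).
  { unfold kap, Rpower.
    assert (0 < ln (1 + eps)) by (rewrite <- ln_1; apply ln_increasing; lra).
    assert (0 < gamma * ln (1 + eps)) by (apply Rmult_lt_0_compat; auto).
    assert (H9 : exp 0 < exp (gamma * ln (1 + eps))) by (apply exp_increasing; nra).
    rewrite exp_0 in H9. exact H9. }
  assert (Hkg : Rpower kap (/ gamma) = 1 + eps) by (unfold kap; apply Rpower_inv_pow; lra).
  pose proof LLge as HL.
  set (eta := (kap ^ 2 - 1) / (4 * (INR L * INR L))).
  assert (Heta : 0 < eta). { unfold eta. apply Rdiv_lt_0_compat. simpl; nra. nra. }
  destruct (ERR eta eps Heta Heps) as [d0 [Hd0 Herr]].
  exists (/ kap). split. apply Rinv_0_lt_compat; auto. exists (kap * d0). split. nra.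
  intros sg Hsg. set (s := / kap * sg).
  assert (Hs : 0 < s < d0).
  { unfold s. split. apply Rmult_lt_0_compat; try lra. apply Rinv_0_lt_compat; lra.
    apply (Rmult_lt_reg_l kap); auto. rewrite <- Rmult_assoc, Rinv_r, Rmult_1_l by lra. lra. }
  assert (Esg : sg = kap * s) by (unfold s; field; lra).
  set (dl := eta * s ^ 2).
  assert (Hdl : 0 < dl) by (unfold dl; apply Rmult_lt_0_compat; auto; apply pow_lt; lra).
  assert (Cond : s ^ 2 + INR L * INR L * (4 * dl) <= sg ^ 2).
  { rewrite Esg. unfold dl, eta. right. field. nra. }
  pose proof (LO s sg dl ltac:(lra) ltac:(lra) Hdl Cond) as U.
  pose proof (Herr s Hs) as Er. fold dl in Er.
  destruct (Ec_nonneg dl Hdl) as [N1 N2].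
  set (G := rsum L (fun k => ntilde H sg (Ak k))).
  assert (HG : G = rsum L (fun k => ncount H sg (Ak k)) + 2 * INR L) by apply G_eq.
  pose proof (sum_nonneg sg ltac:(lra)).
  pose proof (nA_nonneg s (proj1 Hs)).
  set (M := INR L * (1 + Ec1 dl + Ec2 dl)).
  assert (HM : INR L <= M) by (unfold M; nra).
  assert (HGle : G <= ntilde H s A * M).
  { unfold ntilde. set (Nn := ncount H s A + 2).
    assert (Nn * INR L >= Nn + 2 * INR L - 2) by (unfold Nn; nra).
    assert (Nn * M >= Nn * INR L + (Ec1 dl + Ec2 dl)).
    { unfold M. assert (1 <= Nn * INR L) by (unfold Nn; nra). unfold Nn in *. nra. }
    unfold Nn in *. lra. }
  assert (Hln : ln G <= ln (ntilde H s A) + ln M).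
  { rewrite <- ln_mult. apply ln_le; auto. lra. unfold ntilde; lra. unfold M; nra. }
  assert (Hsp : Rpower sg (/ gamma) = (1 + eps) * Rpower s (/ gamma)).
  { rewrite Esg, Rpower_mult_base by lra. rewrite Hkg. auto. }
  unfold gg, ff. fold G. replace (/ kap * sg) with s by auto.
  pose proof (Rpower_pos s (/ gamma)).
  rewrite Hsp. rewrite Rmult_assoc. apply Rmult_le_compat_l. lra.
  eapply Rle_trans. apply Rmult_le_compat_l. lra. exact Hln. rewrite Rmult_plus_distr_l. unfold M in *. lra.
Qed.

Theorem main_section : Delta_gamma H gamma A = limsup0 gg /\ delta_gamma H gamma A = liminf0 gg.
Proof.
  unfold Delta_gamma, delta_gamma. fold ff.
  change (limsup0 ff = limsup0 gg /\ liminf0 ff = liminf0 gg).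
  apply LIM_EQ. apply ff_nonneg. apply gg_nonneg. apply HYP1. apply HYP2.
Qed.

End Main.


Theorem proposition1p4 (H : Hilbert) (gamma : R) (L : nat)
  (A : H -> H) (Ak Akstar : nat -> H -> H) :
  0 < gamma -> (1 <= L)%nat ->
  is_compact_op H A ->
  (forall k, (k < L)%nat -> is_compact_op H (Ak k)) ->
  (forall k, (k < L)%nat -> is_adjoint H (Ak k) (Akstar k)) ->
  (forall x, A x = hsum H L (fun k => Ak k x)) ->
  (forall j k, (j < L)%nat -> (k < L)%nat -> j <> k ->
     Sigma0 H (2 * gamma) (fun x => Akstar k (Ak j x)) /\
     Sigma0 H (2 * gamma) (fun x => Ak k (Akstar j x))) ->
  Delta_gamma H gamma A =
    limsup0 (fun s => Rpower s (/ gamma) * ln (rsum L (fun k => ntilde H s (Ak k)))) /\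
  delta_gamma H gamma A =
    liminf0 (fun s => Rpower s (/ gamma) * ln (rsum L (fun k => ntilde H s (Ak k)))).
Proof.
  intros Hg HL1 HA HAk HAdj HAsum HS.
  exact (main_section H L HL1 A Ak Akstar HA HAk HAdj HAsum gamma Hg HS).
Qed.
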